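(* Assume $M_h=\mathbb{P}_1$ (so $\Phi_h=M_h$). Then any solution $(\phi^{n+1},\mu^{n+1})\in\Phi_h\times M_h$ of the G$_\varepsilon$-scheme satisfies $$\delta_t\Big(\int_\Omega I_h(G_\varepsilon(\phi^{n+1}))\,d\boldsymbol x\Big)+\int_\Omega I_h\big((\omega^{n+1})^2\big)d\boldsymbol x+\int_\Omega\Big|\sqrt{R(\phi^{n+1})}\,\nabla\phi^{n+1}\Big|^2d\boldsymbol x\le\frac1{8\eta^2}\Big(\int_\Omega|\nabla\phi^n|^2d\boldsymbol x+\int_\Omega|\nabla\phi^{n+1}|^2d\boldsymbol x\Big),$$ where $\omega^{n+1}=\mu^{n+1}-\big(I_h(F_c'(\phi^{n+1}))+I_h(F_e'(\phi^n))\big)$ and, for $\phi\in\Phi_h$, $R(\phi)$ is the piecewise constant positive semidefinite diagonal matrix whose $k$-th diagonal entry on element $I$ is $\frac{F_c'(\phi(\boldsymbol x_k))-F_c'(\phi(\boldsymbol x_0))}{\phi(\boldsymbol x_k)-\phi(\boldsymbol x_0)}$ if $\phi(\boldsymbol x_k)\neq\phi(\boldsymbol x_0)$ and $F_c''(\phi(\boldsymbol x_0))$ otherwise. Moreover, $$\int_\Omega I_h(G_\varepsilon(\phi^{n+1}))\,d\boldsymbol x\le C\,\frac{T}{\eta^2},$$ where $C$ depends on the initial energy $E(\phi^0)$ and on $\int_\Omega I_h(G_\varepsilon(\phi^0))\,d\boldsymbol x$.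
   Context: $\Omega\subset\mathbb{R}^d$ ($d=1,2,3$) bounded, $\eta>0$, $\varepsilon\in(0,1/2)$. $F(\phi)=\frac1{4\eta^2}\phi^2(\phi-1)^2=F_c(\phi)+F_e(\phi)$ with $F_c(\phi)=\frac1{4\eta^2}(\phi^4-2\phi^3+\frac32\phi^2)$ and $F_e(\phi)=-\frac1{8\eta^2}\phi^2$; $E(\phi)=\int_\Omega(\frac12|\nabla\phi|^2+F(\phi))d\boldsymbol x$. The time interval $[0,T]$ is split into $N$ steps, $\Delta t=T/N$, $\delta_tf^{n+1}=(f^{n+1}-f^n)/\Delta t$, $n=0,\dots,N-1$. $\mathcal T_h$ is a structured triangulation of $\Omega$ in which every element $I$ has vertices $\boldsymbol x_0,\dots,\boldsymbol x_d$ with $\boldsymbol x_k-\boldsymbol x_0$ parallel to the $k$-th coordinate axis. $\Phi_h$ is the space of continuous piecewise $\mathbb{P}_1$ functions; $M_h$ is the space of continuous piecewise $\mathbb{P}_k$ functions. $I_h$ is nodal $\mathbb{P}_1$ interpolation, $(f,g)_h=\int_\Omega I_h(fg)\,d\boldsymbol x$, $(\cdot,\cdot)$ the $L^2$ product. $G(\phi)=\phi\ln\phi+(1-\phi)\ln(1-\phi)+1$; $G_\varepsilon\in C^2(\mathbb{R})$ equals $G$ on $[\varepsilon,1-\varepsilon]$ and its second-order Taylor polynomial at $\varepsilon$ (resp. $1-\varepsilon$) for $\phi<\varepsilon$ (resp. $\phi>1-\varepsilon$), so $G_\varepsilon''=1/M_\varepsilon$ with $M_\varepsilon(\phi)=\phi(1-\phi)$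 truncated to $\varepsilon(1-\varepsilon)$ outside $[\varepsilon,1-\varepsilon]$. For $\phi\in\Phi_h$, $M^G_\varepsilon(\phi)$ is the piecewise constant diagonal matrix with $k$-th entry on $I$ equal to $\frac{\phi(\boldsymbol x_k)-\phi(\boldsymbol x_0)}{G_\varepsilon'(\phi(\boldsymbol x_k))-G_\varepsilon'(\phi(\boldsymbol x_0))}$ if $\phi(\boldsymbol x_k)\ne\phi(\boldsymbol x_0)$, and $1/G_\varepsilon''(\phi(\boldsymbol x_0))$ otherwise. G$_\varepsilon$-scheme: given $\phi^n\in\Phi_h$ (starting from $\phi^0\in\Phi_h$), find $(\phi^{n+1},\mu^{n+1})\in\Phi_h\times M_h$ such that for all $(\bar\phi,\bar\mu)\in\Phi_h\times M_h$: $\frac1{\Delta t}(\phi^{n+1}-\phi^n,\bar\mu)_h+(M^G_\varepsilon(\phi^{n+1})\nabla\mu^{n+1},\nabla\bar\mu)=0$ and $(\nabla\phi^{n+1},\nabla\bar\phi)+(I_h(F_c'(\phi^{n+1}))+I_h(F_e'(\phi^n)),\bar\phi)_h=(\mu^{n+1},\bar\phi)_h$.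
   Formalization: The bound on $\int_\Omega I_h(G_\varepsilon(\phi^{n+1}))\,d\boldsymbol x$ has right side C(1 + T/η²) in place of C T/η². The statement above fails without it. *)

(* Defs.v *)
From Stdlib Require Import Reals Lra Lia Factorial.
From Coquelicot Require Import Coquelicot.
Open Scope R_scope.

Fixpoint sum_lt (n : nat) (f : nat -> R) : R :=
  match n with O => 0 | S m => sum_lt m f + f m end.

Fixpoint prod_lt (n : nat) (f : nat -> R) : R :=
  match n with O => 1 | S m => prod_lt m f * f m end.

Definition F (eta x : R) : R := / (4 * eta ^ 2) * (x ^ 2 * (x - 1) ^ 2).
Definition Fc (eta x : R) : R := / (4 * eta ^ 2) * (x ^ 4 - 2 * x ^ 3 + 3 / 2 * x ^ 2).
Definition dFc (eta x : R) : R := / (4 * eta ^ 2) * (4 * x ^ 3 - 6 * x ^ 2 + 3 * x).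
Definition d2Fc (eta x : R) : R := / (4 * eta ^ 2) * (12 * x ^ 2 - 12 * x + 3).
Definition Fe (eta x : R) : R := - / (8 * eta ^ 2) * x ^ 2.
Definition dFe (eta x : R) : R := - / (4 * eta ^ 2) * x.

Definition G (x : R) : R := x * ln x + (1 - x) * ln (1 - x) + 1.
Definition dG (x : R) : R := ln x - ln (1 - x).
Definition d2G (x : R) : R := / (x * (1 - x)).

Definition Geps (eps x : R) : R :=
  if Rlt_dec x eps then G eps + dG eps * (x - eps) + d2G eps / 2 * (x - eps) ^ 2
  else if Rlt_dec (1 - eps) x then
    G (1 - eps) + dG (1 - eps) * (x - (1 - eps)) + d2G (1 - eps) / 2 * (x - (1 - eps)) ^ 2
  else G x.
Definition dGeps (eps x : R) : R :=
  if Rlt_dec x eps then dG eps + d2G eps * (x - eps)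
  else if Rlt_dec (1 - eps) x then dG (1 - eps) + d2G (1 - eps) * (x - (1 - eps))
  else dG x.
(* truncated mobility M_eps, and G_eps'' = 1 / M_eps *)
Definition Meps (eps x : R) : R :=
  if Rlt_dec x eps then eps * (1 - eps)
  else if Rlt_dec (1 - eps) x then eps * (1 - eps)
  else x * (1 - x).
Definition d2Geps (eps x : R) : R := / Meps eps x.

(* ---------- meshes ----------
   Points of R^d are  nat -> R  (coordinates 0..d-1).
   Nodes are indexed by 0..nn-1, node i has coordinates  node i : nat -> R.
   Elements are indexed by 0..ne-1; element i is given by its ordered vertex
   list  el i : nat -> nat  (node indices of x_0, ..., x_d). *)

Definition in_hull (d : nat) (node : nat -> nat -> R) (m : nat) (vs : nat -> nat)
    (x : nat -> R) : Prop :=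
  exists lam : nat -> R,
    (forall k, (k < m)%nat -> 0 <= lam k) /\ sum_lt m lam = 1 /\
    forall j, (j < d)%nat -> x j = sum_lt m (fun k => lam k * node (vs k) j).

Definition in_elem (d : nat) (node : nat -> nat -> R) (v : nat -> nat) (x : nat -> R) :=
  in_hull d node (S d) v x.

Definition is_vertex (d : nat) (v : nat -> nat) (n : nat) : Prop :=
  exists k, (k <= d)%nat /\ v k = n.

Definition in_common_face (d : nat) (node : nat -> nat -> R) (v w : nat -> nat)
    (x : nat -> R) : Prop :=
  exists (m : nat) (vs : nat -> nat),
    (forall k, (k < m)%nat -> is_vertex d v (vs k) /\ is_vertex d w (vs k)) /\
    in_hull d node m vs x.

(* Structured (conforming) triangulation of the closure of Omega:
   - vertices are nodes, nodes are pairwise distinct points and each is a vertex;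
   - x_k - x_0 is parallel to the k-th coordinate axis (axis k-1 in 0-based
     numbering) and nonzero;
   - distinct elements have distinct vertex sets, and any two elements meet in
     a common face (the convex hull of their common vertices);
   - the closure of Omega is the union of the elements. *)
Definition structured_triangulation (d nn : nat) (node : nat -> nat -> R)
    (ne : nat) (el : nat -> nat -> nat) (Omega : (nat -> R) -> Prop) : Prop :=
  (forall i k, (i < ne)%nat -> (k <= d)%nat -> (el i k < nn)%nat) /\
  (forall n m, (n < nn)%nat -> (m < nn)%nat ->
     (forall j, (j < d)%nat -> node n j = node m j) -> n = m) /\
  (forall n, (n < nn)%nat -> exists i, (i < ne)%nat /\ is_vertex d (el i) n) /\
  (forall i k, (i < ne)%nat -> (1 <= k <= d)%nat ->
     (forall j, (j < d)%nat -> j <> (k - 1)%nat ->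
        node (el i k) j = node (el i O) j) /\
     node (el i k) (k - 1)%nat <> node (el i O) (k - 1)%nat) /\
  (forall i i', (i < ne)%nat -> (i' < ne)%nat ->
     (forall n, is_vertex d (el i) n <-> is_vertex d (el i') n) -> i = i') /\
  (forall i i' x, (i < ne)%nat -> (i' < ne)%nat ->
     in_elem d node (el i) x -> in_elem d node (el i') x ->
     in_common_face d node (el i) (el i') x) /\
  (forall x, Omega x <-> exists i, (i < ne)%nat /\ in_elem d node (el i) x).

(* ---------- P1 calculus on the structured mesh ----------
   A function of Phi_h (= M_h, continuous P1) is given by its nodal values
   u : nat -> R.  On element v, with x_k = x_0 + h_k e_k, the (constant)
   gradient has components (u(x_k) - u(x_0)) / h_k. *)
Definition hstep (node : nat -> nat -> R) (v : nat -> nat) (k : nat) : R :=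
  node (v k) (k - 1)%nat - node (v O) (k - 1)%nat.

(* |det (x_1 - x_0, ..., x_d - x_0)| = d! |I| *)
Definition jac (d : nat) (node : nat -> nat -> R) (v : nat -> nat) : R :=
  Rabs (prod_lt d (fun k => hstep node v (S k))).

Definition vol (d : nat) (node : nat -> nat -> R) (v : nat -> nat) : R :=
  jac d node v / INR (Factorial.fact d).

Definition gradk (node : nat -> nat -> R) (v : nat -> nat) (u : nat -> R) (k : nat) : R :=
  (u (v k) - u (v O)) / hstep node v k.

(* int_Omega I_h(g) for a nodal function g *)
Definition int_Ih (d : nat) (node : nat -> nat -> R) (ne : nat) (el : nat -> nat -> nat)
    (g : nat -> R) : R :=
  sum_lt ne (fun i => vol d node (el i) / INR (S d) * sum_lt (S d) (fun k => g (el i k))).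

Definition ip_h (d : nat) (node : nat -> nat -> R) (ne : nat) (el : nat -> nat -> nat)
    (f g : nat -> R) : R :=
  int_Ih d node ne el (fun n => f n * g n).

(* (A grad u, grad w) for a piecewise constant diagonal matrix A, given by its
   diagonal entries A v k (k = 1..d) on element v *)
Definition a_form (d : nat) (node : nat -> nat -> R) (ne : nat) (el : nat -> nat -> nat)
    (A : (nat -> nat) -> nat -> R) (u w : nat -> R) : R :=
  sum_lt ne (fun i => vol d node (el i) *
    sum_lt d (fun k => A (el i) (S k) * gradk node (el i) u (S k) * gradk node (el i) w (S k))).

Definition stiff (d : nat) node ne el (u w : nat -> R) : R :=
  a_form d node ne el (fun _ _ => 1) u w.

Definition MG (eps : R) (phi : nat -> R) (v : nat -> nat) (k : nat) : R :=
  if Req_EM_T (phi (v k)) (phi (v O)) then / d2Geps eps (phi (v O))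
  else (phi (v k) - phi (v O)) / (dGeps eps (phi (v k)) - dGeps eps (phi (v O))).

Definition Rmat (eta : R) (phi : nat -> R) (v : nat -> nat) (k : nat) : R :=
  if Req_EM_T (phi (v k)) (phi (v O)) then d2Fc eta (phi (v O))
  else (dFc eta (phi (v k)) - dFc eta (phi (v O))) / (phi (v k) - phi (v O)).

Definition Geps_scheme (d : nat) node ne el (eta eps dt : R)
    (phin phi1 mu1 : nat -> R) : Prop :=
  (forall mub : nat -> R,
     / dt * ip_h d node ne el (fun n => phi1 n - phin n) mub
     + a_form d node ne el (MG eps phi1) mu1 mub = 0) /\
  (forall phib : nat -> R,
     stiff d node ne el phi1 phib
     + ip_h d node ne el (fun n => dFc eta (phi1 n) + dFe eta (phin n)) phib
     = ip_h d node ne el mu1 phib).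

(* ---------- exact integrals over elements (for the energy E) ----------
   sint n s g = integral of g over { l in R^n | l >= 0, l_1 + ... + l_n <= s },
   as an iterated Riemann integral; the argument of g is the list [l_1;...;l_n]. *)
Fixpoint sint (n : nat) (s : R) (g : list R -> R) : R :=
  match n with
  | O => g List.nil
  | S m => RInt (fun t => sint m (s - t) (fun l => g (List.cons t l))) 0 s
  end.

(* int_I f(u(x)) dx for u in P1, by the affine change of variables
   x = x_0 + sum_k l_k (x_k - x_0) from the reference simplex *)
Definition int_elem_comp (d : nat) node (v : nat -> nat) (f : R -> R) (u : nat -> R) : R :=
  jac d node v * sint d 1 (fun l =>
    f (u (v O) + sum_lt d (fun k => List.nth k l 0 * (u (v (S k)) - u (v O))))).

Definition energy (d : nat) node ne el (eta : R) (u : nat -> R) : R :=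
  / 2 * stiff d node ne el u u
  + sum_lt ne (fun i => int_elem_comp d node (el i) (F eta) u).

(* Main.v *)
Require Import Defs.
From Stdlib Require Import Reals Lra Lia Psatz Factorial.
From Coquelicot Require Import Coquelicot.
Open Scope R_scope.

Lemma sum_lt_ext n f g : (forall i, (i < n)%nat -> f i = g i) -> sum_lt n f = sum_lt n g.
Proof. induction n; intros H; simpl; auto. rewrite IHn by (intros; apply H; lia). rewrite H by lia. auto. Qed.

Lemma sum_lt_lin n a b f g : sum_lt n (fun i => a * f i + b * g i) = a * sum_lt n f + b * sum_lt n g.
Proof. induction n; simpl. ring. rewrite IHn. ring. Qed.

Lemma sum_lt_le n f g : (forall i, (i < n)%nat -> f i <= g i) -> sum_lt n f <= sum_lt n g.
Proof. induction n; intros H; simpl. lra. apply Rplus_le_compat. apply IHn; intros; apply H; lia. apply H; lia. Qed.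

Lemma sum_lt_nonneg n f : (forall i, (i < n)%nat -> 0 <= f i) -> 0 <= sum_lt n f.
Proof. intros H. replace 0 with (sum_lt n (fun _ => 0)). apply sum_lt_le; auto.
  clear H; induction n; simpl; auto. rewrite IHn; ring. Qed.

Definition dsum ne d (W : nat -> R) (Tm : nat -> nat -> R) := sum_lt ne (fun i => W i * sum_lt d (Tm i)).

Lemma dsum_ext ne d W T1 T2 : (forall i k, (i < ne)%nat -> (k < d)%nat -> T1 i k = T2 i k) ->
  dsum ne d W T1 = dsum ne d W T2.
Proof. intros H. unfold dsum. apply sum_lt_ext. intros i Hi. f_equal. apply sum_lt_ext. auto. Qed.

Lemma dsum_lin ne d W a b T1 T2 : dsum ne d W (fun i k => a * T1 i k + b * T2 i k) = a * dsum ne d W T1 + b * dsum ne d W T2.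
Proof. unfold dsum. rewrite <- sum_lt_lin. apply sum_lt_ext. intros i _. rewrite sum_lt_lin. ring. Qed.

Lemma dsum_le ne d W T1 T2 : (forall i, (i < ne)%nat -> 0 <= W i) -> (forall i k, (i < ne)%nat -> (k < d)%nat -> T1 i k <= T2 i k) ->
  dsum ne d W T1 <= dsum ne d W T2.
Proof. intros HW H. unfold dsum. apply sum_lt_le. intros i Hi. apply Rmult_le_compat_l; auto. apply sum_lt_le. auto. Qed.

Lemma dsum_nonneg ne d W T : (forall i, (i < ne)%nat -> 0 <= W i) -> (forall i k, (i < ne)%nat -> (k < d)%nat -> 0 <= T i k) ->
  0 <= dsum ne d W T.
Proof. intros HW H. unfold dsum. apply sum_lt_nonneg. intros i Hi. apply Rmult_le_pos; auto. apply sum_lt_nonneg. auto. Qed.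

Lemma vol_nonneg d node v : 0 <= vol d node v.
Proof. unfold vol, jac. apply Rmult_le_pos. apply Rabs_pos. left. apply Rinv_0_lt_compat. apply INR_fact_lt_0. Qed.

Lemma W'_nonneg d node v : 0 <= vol d node v / INR (S d).
Proof. apply Rmult_le_pos. apply vol_nonneg. left. apply Rinv_0_lt_compat. apply lt_0_INR. lia. Qed.

Lemma a_form_dsum d node ne el A u w : a_form d node ne el A u w =
  dsum ne d (fun i => vol d node (el i)) (fun i k => A (el i) (S k) * gradk node (el i) u (S k) * gradk node (el i) w (S k)).
Proof. reflexivity. Qed.

Lemma int_Ih_dsum d node ne el g : int_Ih d node ne el g =
  dsum ne (S d) (fun i => vol d node (el i) / INR (S d)) (fun i k => g (el i k)).
Proof. reflexivity. Qed.

Lemma dsum_lin3 ne d W a b c T1 T2 T3 : dsum ne d W (fun i k => a * T1 i k + b * T2 i k + c * T3 i k) = a * dsum ne d W T1 + b * dsum ne d W T2 + c * dsum ne d W T3.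
Proof. transitivity (dsum ne d W (fun i k => 1 * (a * T1 i k + b * T2 i k) + c * T3 i k)).
  apply dsum_ext; intros; ring.
  rewrite (dsum_lin ne d W 1 c (fun i k => a * T1 i k + b * T2 i k) T3). rewrite dsum_lin. ring. Qed.

Section GE.
Variable e : R.
Hypothesis He : 0 < e < 1/2.

Lemma d2G_pos x : 0 < x < 1 -> 0 < d2G x.
Proof. intros H. unfold d2G. apply Rinv_0_lt_compat. nra. Qed.

Lemma dG_strict x y : 0 < x -> x < y -> y < 1 -> dG x < dG y.
Proof. intros H1 H2 H3. unfold dG.
  assert (ln x < ln y) by (apply ln_increasing; lra).
  assert (ln (1 - y) < ln (1 - x)) by (apply ln_increasing; lra). lra. Qed.

Lemma dGeps_le x : x <= e -> dGeps e x = dG e + d2G e * (x - e).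
Proof. intros H. unfold dGeps. destruct (Rlt_dec x e). auto.
  assert (x = e) by lra. subst. destruct (Rlt_dec (1 - e) e). lra. ring. Qed.
Lemma dGeps_mid x : e <= x <= 1 - e -> dGeps e x = dG x.
Proof. intros H. unfold dGeps. destruct (Rlt_dec x e). lra. destruct (Rlt_dec (1 - e) x). lra. auto. Qed.
Lemma dGeps_ge x : 1 - e <= x -> dGeps e x = dG (1 - e) + d2G (1 - e) * (x - (1 - e)).
Proof. intros H. unfold dGeps. destruct (Rlt_dec x e). lra. destruct (Rlt_dec (1 - e) x). auto.
  assert (x = 1 - e) by lra. subst. ring. Qed.
Lemma Geps_le x : x <= e -> Geps e x = G e + dG e * (x - e) + d2G e / 2 * (x - e) ^ 2.
Proof. intros H. unfold Geps. destruct (Rlt_dec x e). auto.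
  assert (x = e) by lra. subst. destruct (Rlt_dec (1 - e) e). lra. ring. Qed.
Lemma Geps_mid x : e <= x <= 1 - e -> Geps e x = G x.
Proof. intros H. unfold Geps. destruct (Rlt_dec x e). lra. destruct (Rlt_dec (1 - e) x). lra. auto. Qed.
Lemma Geps_ge x : 1 - e <= x -> Geps e x = G (1 - e) + dG (1 - e) * (x - (1 - e)) + d2G (1 - e) / 2 * (x - (1 - e)) ^ 2.
Proof. intros H. unfold Geps. destruct (Rlt_dec x e). lra. destruct (Rlt_dec (1 - e) x). auto.
  assert (x = 1 - e) by lra. subst. ring. Qed.

Lemma dGeps_strict x y : x < y -> dGeps e x < dGeps e y.
Proof.
  intros Hxy.
  assert (P1 : forall a b, a < b -> b <= e -> dGeps e a < dGeps e b).
  { intros a b H1 H2. rewrite !dGeps_le by lra. assert (0 < d2G e) by (apply d2G_pos; lra). nra. }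
  assert (P2 : forall a b, e <= a -> a < b -> b <= 1 - e -> dGeps e a < dGeps e b).
  { intros a b H1 H2 H3. rewrite !dGeps_mid by lra. apply dG_strict; lra. }
  assert (P3 : forall a b, 1 - e <= a -> a < b -> dGeps e a < dGeps e b).
  { intros a b H1 H2. rewrite !dGeps_ge by lra. assert (0 < d2G (1 - e)) by (apply d2G_pos; lra). nra. }
  assert (W2 : forall a b, e <= a -> a <= b -> b <= 1 - e -> dGeps e a <= dGeps e b).
  { intros a b H1 H2 H3. destruct (Req_dec a b). subst; lra. left; apply P2; lra. }
  assert (W3 : forall a b, 1 - e <= a -> a <= b -> dGeps e a <= dGeps e b).
  { intros a b H1 H2. destruct (Req_dec a b). subst; lra. left; apply P3; lra. }
  destruct (Rle_dec y e). apply P1; lra.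
  destruct (Rle_dec (1 - e) x). apply P3; lra.
  destruct (Rlt_dec x e).
  - apply Rlt_le_trans with (dGeps e e). apply P1; lra.
    destruct (Rle_dec y (1 - e)). apply W2; lra.
    apply Rle_trans with (dGeps e (1 - e)). apply W2; lra. apply W3; lra.
  - destruct (Rle_dec y (1 - e)). apply P2; lra.
    apply Rle_lt_trans with (dGeps e (1 - e)). apply W2; lra. apply P3; lra.
Qed.

Lemma dGeps_mono x y : x <= y -> dGeps e x <= dGeps e y.
Proof. intros H. destruct (Req_dec x y). subst; lra. left; apply dGeps_strict; lra. Qed.

Definition chord a b := dGeps e a * (b - a) <= Geps e b - Geps e a <= dGeps e b * (b - a).

Lemma chord_chain a m b : a <= m -> m <= b -> chord a m -> chord m b -> chord a b.
Proof. unfold chord. intros H1 H2 [C1 C2] [C3 C4].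
  assert (M1 := dGeps_mono a m H1). assert (M2 := dGeps_mono m b H2).
  split; nra. Qed.

Lemma G_deriv x : 0 < x < 1 -> derivable_pt_lim G x (dG x).
Proof. intros Hx. apply is_derive_Reals. unfold G, dG. auto_derive.
  - repeat split; lra.
  - unfold Rminus. field. lra. Qed.

Lemma chord_mid a b : e <= a -> a <= b -> b <= 1 - e -> chord a b.
Proof. intros H1 H2 H3. unfold chord. rewrite !Geps_mid, !dGeps_mid by lra.
  destruct (Req_dec a b). subst. lra.
  destruct (MVT_cor2 G dG a b) as [c [Hc1 Hc2]]. lra.
  intros c Hc. apply G_deriv. lra.
  rewrite Hc1.
  assert (dG a <= dG c) by (left; apply dG_strict; lra).
  assert (dG c <= dG b) by (left; apply dG_strict; lra).
  split; nra. Qed.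

Lemma chord_lo a b : a <= b -> b <= e -> chord a b.
Proof. intros H1 H2. unfold chord. rewrite !Geps_le, !dGeps_le by lra.
  set (D := d2G e). assert (0 < D) by (apply d2G_pos; lra). assert (0 <= D * (b - a) ^ 2) by (apply Rmult_le_pos; [lra| apply pow2_ge_0]).
  split; [assert (HH : forall g dg, g + dg * (b - e) + D / 2 * (b - e) ^ 2 - (g + dg * (a - e) + D / 2 * (a - e) ^ 2) - (dg + D * (a - e)) * (b - a) = D / 2 * (b - a) ^ 2) by (intros; field)
         |assert (HH : forall g dg, (dg + D * (b - e)) * (b - a) - (g + dg * (b - e) + D / 2 * (b - e) ^ 2 - (g + dg * (a - e) + D / 2 * (a - e) ^ 2)) = D / 2 * (b - a) ^ 2) by (intros; field)];
  specialize (HH (G e) (dG e)); lra. Qed.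

Lemma chord_hi a b : 1 - e <= a -> a <= b -> chord a b.
Proof. intros H1 H2. unfold chord. rewrite !Geps_ge, !dGeps_ge by lra.
  set (D := d2G (1 - e)). assert (0 < D) by (apply d2G_pos; lra). set (f := 1 - e). assert (0 <= D * (b - a) ^ 2) by (apply Rmult_le_pos; [lra| apply pow2_ge_0]).
  split; [assert (HH : forall g dg, g + dg * (b - f) + D / 2 * (b - f) ^ 2 - (g + dg * (a - f) + D / 2 * (a - f) ^ 2) - (dg + D * (a - f)) * (b - a) = D / 2 * (b - a) ^ 2) by (intros; field)
         |assert (HH : forall g dg, (dg + D * (b - f)) * (b - a) - (g + dg * (b - f) + D / 2 * (b - f) ^ 2 - (g + dg * (a - f) + D / 2 * (a - f) ^ 2)) = D / 2 * (b - a) ^ 2) by (intros; field)];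
  specialize (HH (G f) (dG f)); lra. Qed.

Lemma chord_all a b : a <= b -> chord a b.
Proof. intros H.
  destruct (Rle_dec b e). apply chord_lo; lra.
  destruct (Rle_dec (1 - e) a). apply chord_hi; lra.
  destruct (Rle_dec a e).
  - apply chord_chain with e; try lra. apply chord_lo; lra.
    destruct (Rle_dec b (1 - e)). apply chord_mid; lra.
    apply chord_chain with (1 - e); try lra. apply chord_mid; lra. apply chord_hi; lra.
  - destruct (Rle_dec b (1 - e)). apply chord_mid; lra.
    apply chord_chain with (1 - e); try lra. apply chord_mid; lra. apply chord_hi; lra.
Qed.

Lemma Geps_conv x y : Geps e x - Geps e y <= (x - y) * dGeps e x.
Proof. destruct (Rle_dec y x).
  - destruct (chord_all y x r). nra.
  - destruct (chord_all x y) as [H1 H2]. lra. nra. Qed.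

Lemma Meps_pos x : 0 < Meps e x.
Proof. unfold Meps. destruct (Rlt_dec x e). nra. destruct (Rlt_dec (1 - e) x). nra. nra. Qed.

End GE.

Lemma MG_key eps phi v k : 0 < eps < 1/2 ->
  MG eps phi v k * (dGeps eps (phi (v k)) - dGeps eps (phi (v O))) = phi (v k) - phi (v O).
Proof. intros He. unfold MG. destruct (Req_EM_T (phi (v k)) (phi (v O))) as [E|E].
  - rewrite E. ring.
  - assert (dGeps eps (phi (v k)) - dGeps eps (phi (v O)) <> 0).
    { destruct (Rlt_dec (phi (v k)) (phi (v O))).
      assert (H := dGeps_strict eps He _ _ r). lra.
      assert (H := dGeps_strict eps He (phi (v O)) (phi (v k))). lra. }
    field. auto. Qed.

Lemma MG_nonneg eps phi v k : 0 < eps < 1/2 -> 0 <= MG eps phi v k.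
Proof. intros He. unfold MG. destruct (Req_EM_T (phi (v k)) (phi (v O))) as [E|E].
  - unfold d2Geps. rewrite Rinv_inv. left. apply Meps_pos. auto.
  - destruct (Rlt_dec (phi (v k)) (phi (v O))).
    + assert (H := dGeps_strict eps He _ _ r).
      replace ((phi (v k) - phi (v O)) / (dGeps eps (phi (v k)) - dGeps eps (phi (v O))))
        with ((phi (v O) - phi (v k)) / (dGeps eps (phi (v O)) - dGeps eps (phi (v k)))) by (field; lra).
      apply Rmult_le_pos. lra. left. apply Rinv_0_lt_compat. lra.
    + assert (H := dGeps_strict eps He (phi (v O)) (phi (v k))).
      apply Rmult_le_pos. lra. left. apply Rinv_0_lt_compat. lra. Qed.

Lemma Rmat_key eta phi v k :
  Rmat eta phi v k * (phi (v k) - phi (v O)) = dFc eta (phi (v k)) - dFc eta (phi (v O)).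
Proof. unfold Rmat. destruct (Req_EM_T (phi (v k)) (phi (v O))) as [E|E].
  - rewrite E. ring.
  - field. lra. Qed.

Lemma Rmat_nonneg eta phi v k : 0 < eta -> 0 <= Rmat eta phi v k.
Proof. intros Heta. assert (HK : 0 < / (4 * eta ^ 2)) by (apply Rinv_0_lt_compat; nra).
  unfold Rmat. destruct (Req_EM_T (phi (v k)) (phi (v O))) as [E|E].
  - unfold d2Fc. apply Rmult_le_pos. lra. assert (0 <= (2 * phi (v O) - 1) ^ 2) by apply pow2_ge_0. nra.
  - set (x := phi (v k)). set (y := phi (v O)). fold x y in E.
    unfold dFc.
    replace ((/ (4 * eta ^ 2) * (4 * x ^ 3 - 6 * x ^ 2 + 3 * x) - / (4 * eta ^ 2) * (4 * y ^ 3 - 6 * y ^ 2 + 3 * y)) / (x - y))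
      with (/ (4 * eta ^ 2) * (4 * (((x - 1/2) + (y - 1/2) / 2)^2 + 3/4 * (y - 1/2)^2))) by (field; lra).
    apply Rmult_le_pos. lra. assert (0 <= ((x - 1/2) + (y - 1/2) / 2)^2) by apply pow2_ge_0. assert (0 <= (y - 1/2)^2) by apply pow2_ge_0. lra. Qed.

Lemma F_split eta x y : 0 < eta -> F eta x - F eta y <= (dFc eta x + dFe eta y) * (x - y).
Proof. intros Heta. assert (HK : 0 < / (4 * eta ^ 2)) by (apply Rinv_0_lt_compat; nra).
  unfold F, dFc, dFe.
  replace (- / (4 * eta ^ 2)) with (- (/ (4 * eta ^ 2))) by ring.
  set (K := / (4 * eta ^ 2)).
  assert (0 <= (x - y) ^ 2 * (2 * (x - 1/2) ^ 2 + ((x - 1/2) + (y - 1/2)) ^ 2 + 1/2)) by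
    (apply Rmult_le_pos; [apply pow2_ge_0|]; assert (0 <= (x - 1/2) ^ 2) by apply pow2_ge_0;
     assert (0 <= ((x - 1/2) + (y - 1/2)) ^ 2) by apply pow2_ge_0; lra).
  assert (HE : (K * (4 * x ^ 3 - 6 * x ^ 2 + 3 * x) + - K * y) * (x - y) - (K * (x ^ 2 * (x - 1) ^ 2) - K * (y ^ 2 * (y - 1) ^ 2))
     = K * ((x - y) ^ 2 * (2 * (x - 1/2) ^ 2 + ((x - 1/2) + (y - 1/2)) ^ 2 + 1/2))) by (field).
  assert (0 <= K * ((x - y) ^ 2 * (2 * (x - 1/2) ^ 2 + ((x - 1/2) + (y - 1/2)) ^ 2 + 1/2))) by (apply Rmult_le_pos; [unfold K; lra | lra]).
  lra. Qed.

Section P1.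
Variables (d : nat) (node : nat -> nat -> R) (ne : nat) (el : nat -> nat -> nat).
Local Notation W := (fun i => vol d node (el i)).
Local Notation W' := (fun i => vol d node (el i) / INR (S d)).
Local Notation gk u i k := (gradk node (el i) u (S k)).
Lemma HW : forall i, (i < ne)%nat -> 0 <= W i. Proof. intros; apply vol_nonneg. Qed.
Lemma HW' : forall i, (i < ne)%nat -> 0 <= W' i. Proof. intros; apply W'_nonneg. Qed.

Lemma part1_core eta eps dt phin phi1 mu1 :
  0 < eta -> 0 < eps < 1/2 -> 0 < dt -> Geps_scheme d node ne el eta eps dt phin phi1 mu1 ->
  let omega := fun n => mu1 n - (dFc eta (phi1 n) + dFe eta (phin n)) in
  (int_Ih d node ne el (fun n => Geps eps (phi1 n))
     - int_Ih d node ne el (fun n => Geps eps (phin n))) / dt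
  + ip_h d node ne el omega omega
  + a_form d node ne el (Rmat eta phi1) phi1 phi1
  <= / (8 * eta ^ 2) * (stiff d node ne el phin phin + stiff d node ne el phi1 phi1).
Proof.
  intros Heta He Hdt [E1 E2] omega.
  specialize (E1 (fun n => dGeps eps (phi1 n))). specialize (E2 omega).
  unfold ip_h, stiff in *. rewrite !int_Ih_dsum, !a_form_dsum in *.
  set (X := dsum ne d W (fun i k => gk phi1 i k * gk mu1 i k)).
  set (Y := dsum ne d W (fun i k => gk phi1 i k * gk phin i k)).
  set (aR := dsum ne d W (fun i k => Rmat eta phi1 (el i) (S k) * gradk node (el i) phi1 (S k) * gradk node (el i) phi1 (S k))).
  set (Sn := dsum ne d W (fun i k => 1 * gradk node (el i) phin (S k) * gradk node (el i) phin (S k))).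
  set (S1 := dsum ne d W (fun i k => 1 * gradk node (el i) phi1 (S k) * gradk node (el i) phi1 (S k))).
  set (C := dsum ne (S d) W' (fun i k => (phi1 (el i k) - phin (el i k)) * dGeps eps (phi1 (el i k)))).
  set (Dg := dsum ne (S d) W' (fun i k => Geps eps (phi1 (el i k))) - dsum ne (S d) W' (fun i k => Geps eps (phin (el i k)))).
  set (IO := dsum ne (S d) W' (fun i k => omega (el i k) * omega (el i k))).
  assert (Ha : dsum ne d W (fun i k => MG eps phi1 (el i) (S k) * gradk node (el i) mu1 (S k) * gradk node (el i) (fun n => dGeps eps (phi1 n)) (S k)) = X).
  { unfold X. apply dsum_ext. intros i k _ _. unfold gradk.
    rewrite <- (MG_key eps phi1 (el i) (S k) He). unfold Rdiv. ring. }
  assert (Hb : dsum ne d W (fun i k => 1 * gradk node (el i) phi1 (S k) * gradk node (el i) omega (S k)) = 1 * X + (-1) * aR + / (4 * eta ^ 2) * Y).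
  { unfold X, aR, Y. rewrite <- dsum_lin3. apply dsum_ext. intros i k _ _. unfold gradk, omega.
    assert (Hk := Rmat_key eta phi1 (el i) (S k)).
    set (a := dFc eta (phi1 (el i (S k)))) in *. set (b := dFc eta (phi1 (el i 0%nat))) in *.
    replace a with (b + Rmat eta phi1 (el i) (S k) * (phi1 (el i (S k)) - phi1 (el i 0%nat))) by lra.
    unfold dFe, Rdiv. ring. }
  assert (Hc : IO = 1 * dsum ne (S d) W' (fun i k => mu1 (el i k) * omega (el i k)) + (-1) * dsum ne (S d) W' (fun i k => (dFc eta (phi1 (el i k)) + dFe eta (phin (el i k))) * omega (el i k))).
  { unfold IO. rewrite <- dsum_lin. apply dsum_ext. intros. unfold omega. ring. }
  assert (Hd : Dg <= C).
  { unfold Dg, C. replace (dsum ne (S d) W' (fun i k => Geps eps (phi1 (el i k))) - dsum ne (S d) W' (fun i k => Geps eps (phin (el i k))))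
      with (1 * dsum ne (S d) W' (fun i k => Geps eps (phi1 (el i k))) + (-1) * dsum ne (S d) W' (fun i k => Geps eps (phin (el i k)))) by ring.
    rewrite <- dsum_lin. apply dsum_le. apply HW'. intros i k _ _.
    pose proof (Geps_conv eps He (phi1 (el i k)) (phin (el i k))). lra. }
  assert (He2 : 2 * Y <= 1 * Sn + 1 * S1).
  { unfold Y, Sn, S1. rewrite <- dsum_lin. rewrite <- (Rplus_0_r (2 * _)).
    rewrite <- (Rmult_0_l (dsum ne d W (fun i k => 0))).
    rewrite <- dsum_lin. apply dsum_le. apply HW. intros i k _ _.
    set (p := gradk node (el i) phi1 (S k)). set (q := gradk node (el i) phin (S k)).
    assert (0 <= (p - q) ^ 2) by apply pow2_ge_0. nra. }
  rewrite Ha in E1. rewrite Hb in E2. fold IO C aR Sn S1 in E1. fold IO C aR Sn S1 in E2.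
  fold C in E1.
  assert (HK : 0 < / (4 * eta ^ 2)) by (apply Rinv_0_lt_compat; nra).
  assert (H8 : / (8 * eta ^ 2) = / (4 * eta ^ 2) / 2) by (field; lra).
  rewrite H8.
  assert (Hdiv : Dg / dt <= C / dt) by (apply Rmult_le_compat_r; [left; apply Rinv_0_lt_compat; lra | lra]).
  assert (HC : C / dt = - X) by (unfold Rdiv; rewrite Rmult_comm; lra).
  assert (HY : / (4 * eta ^ 2) * (2 * Y) <= / (4 * eta ^ 2) * (1 * Sn + 1 * S1)) by (apply Rmult_le_compat_l; lra).
  lra.
Qed.

Lemma energy_decay eta eps dt phin phi1 mu1 :
  0 < eta -> 0 < eps < 1/2 -> 0 < dt -> Geps_scheme d node ne el eta eps dt phin phi1 mu1 ->
  / 2 * stiff d node ne el phi1 phi1 + int_Ih d node ne el (fun n => F eta (phi1 n))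
  <= / 2 * stiff d node ne el phin phin + int_Ih d node ne el (fun n => F eta (phin n)).
Proof.
  intros Heta He Hdt [E1 E2].
  specialize (E1 mu1). specialize (E2 (fun n => phi1 n - phin n)).
  unfold ip_h, stiff in *. rewrite !int_Ih_dsum, !a_form_dsum in *.
  set (P := dsum ne (S d) W' (fun i k => (phi1 (el i k) - phin (el i k)) * mu1 (el i k))) in *.
  set (Q := dsum ne d W (fun i k => MG eps phi1 (el i) (S k) * gradk node (el i) mu1 (S k) * gradk node (el i) mu1 (S k))) in *.
  assert (HQ : 0 <= Q).
  { apply dsum_nonneg. apply HW. intros i k _ _. pose proof (MG_nonneg eps phi1 (el i) (S k) He).
    set (g := gradk node (el i) mu1 (S k)). assert (0 <= g * g) by nra. rewrite Rmult_assoc. apply Rmult_le_pos; lra. }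
  assert (HP : P <= 0).
  { assert (Hi : 0 < / dt) by (apply Rinv_0_lt_compat; lra). nra. }
  assert (HP2 : dsum ne (S d) W' (fun i k => mu1 (el i k) * (phi1 (el i k) - phin (el i k))) = P).
  { unfold P. apply dsum_ext. intros. ring. }
  rewrite HP2 in E2.
  assert (H1 : / 2 * dsum ne d W (fun i k => 1 * gradk node (el i) phi1 (S k) * gradk node (el i) phi1 (S k))
             + (- / 2) * dsum ne d W (fun i k => 1 * gradk node (el i) phin (S k) * gradk node (el i) phin (S k))
             <= dsum ne d W (fun i k => 1 * gradk node (el i) phi1 (S k) * gradk node (el i) (fun n => phi1 n - phin n) (S k))).
  { rewrite <- dsum_lin. apply dsum_le. apply HW. intros i k _ _.
    replace (gradk node (el i) (fun n => phi1 n - phin n) (S k)) with (gradk node (el i) phi1 (S k) - gradk node (el i) phin (S k))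
      by (unfold gradk, Rdiv; ring).
    set (p := gradk node (el i) phi1 (S k)). set (q := gradk node (el i) phin (S k)).
    assert (0 <= (p - q) ^ 2) by apply pow2_ge_0. nra. }
  assert (H2 : 1 * dsum ne (S d) W' (fun i k => F eta (phi1 (el i k))) + (-1) * dsum ne (S d) W' (fun i k => F eta (phin (el i k)))
             <= dsum ne (S d) W' (fun i k => (dFc eta (phi1 (el i k)) + dFe eta (phin (el i k))) * (phi1 (el i k) - phin (el i k)))).
  { rewrite <- dsum_lin. apply dsum_le. apply HW'. intros i k _ _.
    pose proof (F_split eta (phi1 (el i k)) (phin (el i k)) Heta). lra. }
  lra.
Qed.
End P1.

Lemma is_RInt_poly (f Fp : R -> R) (a b v : R) :
  (forall x, is_derive Fp x (f x)) -> (forall x, continuous f x) -> Fp b - Fp a = v -> is_RInt f a b v.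
Proof. intros H1 H2 H3. subst v. apply (is_RInt_derive Fp f); auto. Qed.
Definition A1_0 (u0 a t : R) : R := (1/3)*a^2*t^3 + (-1/2)*a^3*t^4 + (1/5)*a^4*t^5 + u0*a*t^2 + (-2)*u0*a^2*t^3 + u0*a^3*t^4 + u0^2*t + (-3)*u0^2*a*t^2 + 2*u0^2*a^2*t^3 + (-2)*u0^3*t + 2*u0^3*a*t^2 + u0^4*t.
Definition P1_0 (u0 a  : R) : R := (1/3)*a^2 + (-1/2)*a^3 + (1/5)*a^4 + u0*a + (-2)*u0*a^2 + u0*a^3 + u0^2 + (-3)*u0^2*a + 2*u0^2*a^2 + (-2)*u0^3 + 2*u0^3*a + u0^4.
Definition M1 (z00 z01 z11 : R) : R := (1/5)*z11^2 + (1/5)*z01*z11 + (2/15)*z01^2 + (1/15)*z00*z11 + (1/5)*z00*z01 + (1/5)*z00^2.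
Lemma M1_sos (z00 z01 z11 : R) : M1 z00 z01 z11 - (1/100) * (z00^2 + z11^2) = (19/100) * ((10/57)*z11 + (10/19)*z01 + z00)^2 + (23/285) * ((47/46)*z11 + z01)^2 + (517/5175) * (z11)^2.
Proof. unfold M1. field. Qed.
Definition A2_1 (u0 a b t s : R) : R := (1/3)*b^2*s^3 + (-1/2)*b^3*s^4 + (1/5)*b^4*s^5 + a*b*t*s^2 + (-2)*a*b^2*t*s^3 + a*b^3*t*s^4 + a^2*t^2*s + (-3)*a^2*b*t^2*s^2 + 2*a^2*b^2*t^2*s^3 + (-2)*a^3*t^3*s + 2*a^3*b*t^3*s^2 + a^4*t^4*s + u0*b*s^2 + (-2)*u0*b^2*s^3 + u0*b^3*s^4 + 2*u0*a*t*s + (-6)*u0*a*b*t*s^2 + 4*u0*a*b^2*t*s^3 + (-6)*u0*a^2*t^2*s + 6*u0*a^2*b*t^2*s^2 + 4*u0*a^3*t^3*s + u0^2*s + (-3)*u0^2*b*s^2 + 2*u0^2*b^2*s^3 + (-6)*u0^2*a*t*s + 6*u0^2*a*b*t*s^2 + 6*u0^2*a^2*t^2*s + (-2)*u0^3*s + 2*u0^3*b*s^2 + 4*u0^3*a*t*s + u0^4*s.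
Definition P2_1 (u0 a b t : R) : R := (1/3)*b^2 + (-1)*b^2*t + b^2*t^2 + (-1/3)*b^2*t^3 + (-1/2)*b^3 + 2*b^3*t + (-3)*b^3*t^2 + 2*b^3*t^3 + (-1/2)*b^3*t^4 + (1/5)*b^4 + (-1)*b^4*t + 2*b^4*t^2 + (-2)*b^4*t^3 + b^4*t^4 + (-1/5)*b^4*t^5 + a*b*t + (-2)*a*b*t^2 + a*b*t^3 + (-2)*a*b^2*t + 6*a*b^2*t^2 + (-6)*a*b^2*t^3 + 2*a*b^2*t^4 + a*b^3*t + (-4)*a*b^3*t^2 + 6*a*b^3*t^3 + (-4)*a*b^3*t^4 + a*b^3*t^5 + a^2*t^2 + (-1)*a^2*t^3 + (-3)*a^2*b*t^2 + 6*a^2*b*t^3 + (-3)*a^2*b*t^4 + 2*a^2*b^2*t^2 + (-6)*a^2*b^2*t^3 + 6*a^2*b^2*t^4 + (-2)*a^2*b^2*t^5 + (-2)*a^3*t^3 + 2*a^3*t^4 + 2*a^3*b*t^3 + (-4)*a^3*b*t^4 + 2*a^3*b*t^5 + a^4*t^4 + (-1)*a^4*t^5 + u0*b + (-2)*u0*b*t + u0*b*t^2 + (-2)*u0*b^2 + 6*u0*b^2*t + (-6)*u0*b^2*t^2 + 2*u0*b^2*t^3 + u0*b^3 + (-4)*u0*b^3*t + 6*u0*b^3*t^2 + (-4)*u0*b^3*t^3 + u0*b^3*t^4 + 2*u0*a*t + (-2)*u0*a*t^2 + (-6)*u0*a*b*t + 12*u0*a*b*t^2 + (-6)*u0*a*b*t^3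 + 4*u0*a*b^2*t + (-12)*u0*a*b^2*t^2 + 12*u0*a*b^2*t^3 + (-4)*u0*a*b^2*t^4 + (-6)*u0*a^2*t^2 + 6*u0*a^2*t^3 + 6*u0*a^2*b*t^2 + (-12)*u0*a^2*b*t^3 + 6*u0*a^2*b*t^4 + 4*u0*a^3*t^3 + (-4)*u0*a^3*t^4 + u0^2 + (-1)*u0^2*t + (-3)*u0^2*b + 6*u0^2*b*t + (-3)*u0^2*b*t^2 + 2*u0^2*b^2 + (-6)*u0^2*b^2*t + 6*u0^2*b^2*t^2 + (-2)*u0^2*b^2*t^3 + (-6)*u0^2*a*t + 6*u0^2*a*t^2 + 6*u0^2*a*b*t + (-12)*u0^2*a*b*t^2 + 6*u0^2*a*b*t^3 + 6*u0^2*a^2*t^2 + (-6)*u0^2*a^2*t^3 + (-2)*u0^3 + 2*u0^3*t + 2*u0^3*b + (-4)*u0^3*b*t + 2*u0^3*b*t^2 + 4*u0^3*a*t + (-4)*u0^3*a*t^2 + u0^4 + (-1)*u0^4*t.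
Definition A2_0 (u0 a b t : R) : R := (1/3)*b^2*t + (-1/2)*b^2*t^2 + (1/3)*b^2*t^3 + (-1/12)*b^2*t^4 + (-1/2)*b^3*t + b^3*t^2 + (-1)*b^3*t^3 + (1/2)*b^3*t^4 + (-1/10)*b^3*t^5 + (1/5)*b^4*t + (-1/2)*b^4*t^2 + (2/3)*b^4*t^3 + (-1/2)*b^4*t^4 + (1/5)*b^4*t^5 + (-1/30)*b^4*t^6 + (1/2)*a*b*t^2 + (-2/3)*a*b*t^3 + (1/4)*a*b*t^4 + (-1)*a*b^2*t^2 + 2*a*b^2*t^3 + (-3/2)*a*b^2*t^4 + (2/5)*a*b^2*t^5 + (1/2)*a*b^3*t^2 + (-4/3)*a*b^3*t^3 + (3/2)*a*b^3*t^4 + (-4/5)*a*b^3*t^5 + (1/6)*a*b^3*t^6 + (1/3)*a^2*t^3 + (-1/4)*a^2*t^4 + (-1)*a^2*b*t^3 + (3/2)*a^2*b*t^4 + (-3/5)*a^2*b*t^5 + (2/3)*a^2*b^2*t^3 + (-3/2)*a^2*b^2*t^4 + (6/5)*a^2*b^2*t^5 + (-1/3)*a^2*b^2*t^6 + (-1/2)*a^3*t^4 + (2/5)*a^3*t^5 + (1/2)*a^3*b*t^4 + (-4/5)*a^3*b*t^5 + (1/3)*a^3*b*t^6 + (1/5)*a^4*t^5 + (-1/6)*a^4*t^6 + u0*b*t + (-1)*u0*b*t^2 + (1/3)*u0*b*t^3 + (-2)*u0*b^2*t + 3*u0*b^2*t^2 + (-2)*u0*b^2*t^3 + (1/2)*u0*b^2*t^4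 + u0*b^3*t + (-2)*u0*b^3*t^2 + 2*u0*b^3*t^3 + (-1)*u0*b^3*t^4 + (1/5)*u0*b^3*t^5 + u0*a*t^2 + (-2/3)*u0*a*t^3 + (-3)*u0*a*b*t^2 + 4*u0*a*b*t^3 + (-3/2)*u0*a*b*t^4 + 2*u0*a*b^2*t^2 + (-4)*u0*a*b^2*t^3 + 3*u0*a*b^2*t^4 + (-4/5)*u0*a*b^2*t^5 + (-2)*u0*a^2*t^3 + (3/2)*u0*a^2*t^4 + 2*u0*a^2*b*t^3 + (-3)*u0*a^2*b*t^4 + (6/5)*u0*a^2*b*t^5 + u0*a^3*t^4 + (-4/5)*u0*a^3*t^5 + u0^2*t + (-1/2)*u0^2*t^2 + (-3)*u0^2*b*t + 3*u0^2*b*t^2 + (-1)*u0^2*b*t^3 + 2*u0^2*b^2*t + (-3)*u0^2*b^2*t^2 + 2*u0^2*b^2*t^3 + (-1/2)*u0^2*b^2*t^4 + (-3)*u0^2*a*t^2 + 2*u0^2*a*t^3 + 3*u0^2*a*b*t^2 + (-4)*u0^2*a*b*t^3 + (3/2)*u0^2*a*b*t^4 + 2*u0^2*a^2*t^3 + (-3/2)*u0^2*a^2*t^4 + (-2)*u0^3*t + u0^3*t^2 + 2*u0^3*b*t + (-2)*u0^3*b*t^2 + (2/3)*u0^3*b*t^3 + 2*u0^3*a*t^2 + (-4/3)*u0^3*a*t^3 + u0^4*t + (-1/2)*u0^4*t^2.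
Definition P2_0 (u0 a b  : R) : R := (1/12)*b^2 + (-1/10)*b^3 + (1/30)*b^4 + (1/12)*a*b + (-1/10)*a*b^2 + (1/30)*a*b^3 + (1/12)*a^2 + (-1/10)*a^2*b + (1/30)*a^2*b^2 + (-1/10)*a^3 + (1/30)*a^3*b + (1/30)*a^4 + (1/3)*u0*b + (-1/2)*u0*b^2 + (1/5)*u0*b^3 + (1/3)*u0*a + (-1/2)*u0*a*b + (1/5)*u0*a*b^2 + (-1/2)*u0*a^2 + (1/5)*u0*a^2*b + (1/5)*u0*a^3 + (1/2)*u0^2 + (-1)*u0^2*b + (1/2)*u0^2*b^2 + (-1)*u0^2*a + (1/2)*u0^2*a*b + (1/2)*u0^2*a^2 + (-1)*u0^3 + (2/3)*u0^3*b + (2/3)*u0^3*a + (1/2)*u0^4.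
Definition M2 (z00 z01 z02 z11 z12 z22 : R) : R := (1/30)*z22^2 + (1/30)*z12*z22 + (1/45)*z12^2 + (1/90)*z11*z22 + (1/30)*z11*z12 + (1/30)*z11^2 + (1/30)*z02*z22 + (1/45)*z02*z12 + (1/90)*z02*z11 + (1/45)*z02^2 + (1/90)*z01*z22 + (1/45)*z01*z12 + (1/30)*z01*z11 + (1/45)*z01*z02 + (1/45)*z01^2 + (1/90)*z00*z22 + (1/90)*z00*z12 + (1/90)*z00*z11 + (1/30)*z00*z02 + (1/30)*z00*z01 + (1/30)*z00^2.
Lemma M2_sos (z00 z01 z02 z11 z12 z22 : R) : M2 z00 z01 z02 z11 z12 z22 - (1/100) * (z00^2 + z11^2 + z22^2) = (7/300) * ((5/21)*z22 + (5/21)*z12 + (5/21)*z11 + (5/7)*z02 + (5/7)*z01 + z00)^2 + (13/1260) * ((2/13)*z22 + (9/13)*z12 + (16/13)*z11 + (-1/13)*z02 + z01)^2 + (2/195) * ((5/4)*z22 + (3/4)*z12 + (1/4)*z11 + z02)^2 + (31/5400) * ((-5/31)*z22 + (25/31)*z12 + z11)^2 + (1/155) * ((5/6)*z22 + z12)^2 + (1/900) * (z22)^2.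
Proof. unfold M2. field. Qed.
Definition A3_2 (u0 a b c t s r : R) : R := (1/3)*c^2*r^3 + (-1/2)*c^3*r^4 + (1/5)*c^4*r^5 + b*c*s*r^2 + (-2)*b*c^2*s*r^3 + b*c^3*s*r^4 + b^2*s^2*r + (-3)*b^2*c*s^2*r^2 + 2*b^2*c^2*s^2*r^3 + (-2)*b^3*s^3*r + 2*b^3*c*s^3*r^2 + b^4*s^4*r + a*c*t*r^2 + (-2)*a*c^2*t*r^3 + a*c^3*t*r^4 + 2*a*b*t*s*r + (-6)*a*b*c*t*s*r^2 + 4*a*b*c^2*t*s*r^3 + (-6)*a*b^2*t*s^2*r + 6*a*b^2*c*t*s^2*r^2 + 4*a*b^3*t*s^3*r + a^2*t^2*r + (-3)*a^2*c*t^2*r^2 + 2*a^2*c^2*t^2*r^3 + (-6)*a^2*b*t^2*s*r + 6*a^2*b*c*t^2*s*r^2 + 6*a^2*b^2*t^2*s^2*r + (-2)*a^3*t^3*r + 2*a^3*c*t^3*r^2 + 4*a^3*b*t^3*s*r + a^4*t^4*r + u0*c*r^2 + (-2)*u0*c^2*r^3 + u0*c^3*r^4 + 2*u0*b*s*r + (-6)*u0*b*c*s*r^2 + 4*u0*b*c^2*s*r^3 + (-6)*u0*b^2*s^2*r + 6*u0*b^2*c*s^2*r^2 + 4*u0*b^3*s^3*r + 2*u0*a*t*r + (-6)*u0*a*c*t*r^2 + 4*u0*a*c^2*t*r^3 + (-12)*u0*a*b*t*s*r + 12*u0*a*b*c*t*s*r^2 + 12*u0*a*b^2*t*s^2*r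 + (-6)*u0*a^2*t^2*r + 6*u0*a^2*c*t^2*r^2 + 12*u0*a^2*b*t^2*s*r + 4*u0*a^3*t^3*r + u0^2*r + (-3)*u0^2*c*r^2 + 2*u0^2*c^2*r^3 + (-6)*u0^2*b*s*r + 6*u0^2*b*c*s*r^2 + 6*u0^2*b^2*s^2*r + (-6)*u0^2*a*t*r + 6*u0^2*a*c*t*r^2 + 12*u0^2*a*b*t*s*r + 6*u0^2*a^2*t^2*r + (-2)*u0^3*r + 2*u0^3*c*r^2 + 4*u0^3*b*s*r + 4*u0^3*a*t*r + u0^4*r.
Definition P3_2 (u0 a b c t s : R) : R := (1/3)*c^2 + (-1)*c^2*s + c^2*s^2 + (-1/3)*c^2*s^3 + (-1)*c^2*t + 2*c^2*t*s + (-1)*c^2*t*s^2 + c^2*t^2 + (-1)*c^2*t^2*s + (-1/3)*c^2*t^3 + (-1/2)*c^3 + 2*c^3*s + (-3)*c^3*s^2 + 2*c^3*s^3 + (-1/2)*c^3*s^4 + 2*c^3*t + (-6)*c^3*t*s + 6*c^3*t*s^2 + (-2)*c^3*t*s^3 + (-3)*c^3*t^2 + 6*c^3*t^2*s + (-3)*c^3*t^2*s^2 + 2*c^3*t^3 + (-2)*c^3*t^3*s + (-1/2)*c^3*t^4 + (1/5)*c^4 + (-1)*c^4*s + 2*c^4*s^2 + (-2)*c^4*s^3 + c^4*s^4 + (-1/5)*c^4*s^5 + (-1)*c^4*t + 4*c^4*t*s + (-6)*c^4*t*s^2 + 4*c^4*t*s^3 + (-1)*c^4*t*s^4 + 2*c^4*t^2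 + (-6)*c^4*t^2*s + 6*c^4*t^2*s^2 + (-2)*c^4*t^2*s^3 + (-2)*c^4*t^3 + 4*c^4*t^3*s + (-2)*c^4*t^3*s^2 + c^4*t^4 + (-1)*c^4*t^4*s + (-1/5)*c^4*t^5 + b*c*s + (-2)*b*c*s^2 + b*c*s^3 + (-2)*b*c*t*s + 2*b*c*t*s^2 + b*c*t^2*s + (-2)*b*c^2*s + 6*b*c^2*s^2 + (-6)*b*c^2*s^3 + 2*b*c^2*s^4 + 6*b*c^2*t*s + (-12)*b*c^2*t*s^2 + 6*b*c^2*t*s^3 + (-6)*b*c^2*t^2*s + 6*b*c^2*t^2*s^2 + 2*b*c^2*t^3*s + b*c^3*s + (-4)*b*c^3*s^2 + 6*b*c^3*s^3 + (-4)*b*c^3*s^4 + b*c^3*s^5 + (-4)*b*c^3*t*s + 12*b*c^3*t*s^2 + (-12)*b*c^3*t*s^3 + 4*b*c^3*t*s^4 + 6*b*c^3*t^2*s + (-12)*b*c^3*t^2*s^2 + 6*b*c^3*t^2*s^3 + (-4)*b*c^3*t^3*s + 4*b*c^3*t^3*s^2 + b*c^3*t^4*s + b^2*s^2 + (-1)*b^2*s^3 + (-1)*b^2*t*s^2 + (-3)*b^2*c*s^2 + 6*b^2*c*s^3 + (-3)*b^2*c*s^4 + 6*b^2*c*t*s^2 + (-6)*b^2*c*t*s^3 + (-3)*b^2*c*t^2*s^2 + 2*b^2*c^2*s^2 + (-6)*b^2*c^2*s^3 + 6*b^2*c^2*s^4 + (-2)*b^2*c^2*s^5 + (-6)*b^2*c^2*t*s^2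 + 12*b^2*c^2*t*s^3 + (-6)*b^2*c^2*t*s^4 + 6*b^2*c^2*t^2*s^2 + (-6)*b^2*c^2*t^2*s^3 + (-2)*b^2*c^2*t^3*s^2 + (-2)*b^3*s^3 + 2*b^3*s^4 + 2*b^3*t*s^3 + 2*b^3*c*s^3 + (-4)*b^3*c*s^4 + 2*b^3*c*s^5 + (-4)*b^3*c*t*s^3 + 4*b^3*c*t*s^4 + 2*b^3*c*t^2*s^3 + b^4*s^4 + (-1)*b^4*s^5 + (-1)*b^4*t*s^4 + a*c*t + (-2)*a*c*t*s + a*c*t*s^2 + (-2)*a*c*t^2 + 2*a*c*t^2*s + a*c*t^3 + (-2)*a*c^2*t + 6*a*c^2*t*s + (-6)*a*c^2*t*s^2 + 2*a*c^2*t*s^3 + 6*a*c^2*t^2 + (-12)*a*c^2*t^2*s + 6*a*c^2*t^2*s^2 + (-6)*a*c^2*t^3 + 6*a*c^2*t^3*s + 2*a*c^2*t^4 + a*c^3*t + (-4)*a*c^3*t*s + 6*a*c^3*t*s^2 + (-4)*a*c^3*t*s^3 + a*c^3*t*s^4 + (-4)*a*c^3*t^2 + 12*a*c^3*t^2*s + (-12)*a*c^3*t^2*s^2 + 4*a*c^3*t^2*s^3 + 6*a*c^3*t^3 + (-12)*a*c^3*t^3*s + 6*a*c^3*t^3*s^2 + (-4)*a*c^3*t^4 + 4*a*c^3*t^4*s + a*c^3*t^5 + 2*a*b*t*s + (-2)*a*b*t*s^2 + (-2)*a*b*t^2*s + (-6)*a*b*c*t*s + 12*a*b*c*t*s^2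 + (-6)*a*b*c*t*s^3 + 12*a*b*c*t^2*s + (-12)*a*b*c*t^2*s^2 + (-6)*a*b*c*t^3*s + 4*a*b*c^2*t*s + (-12)*a*b*c^2*t*s^2 + 12*a*b*c^2*t*s^3 + (-4)*a*b*c^2*t*s^4 + (-12)*a*b*c^2*t^2*s + 24*a*b*c^2*t^2*s^2 + (-12)*a*b*c^2*t^2*s^3 + 12*a*b*c^2*t^3*s + (-12)*a*b*c^2*t^3*s^2 + (-4)*a*b*c^2*t^4*s + (-6)*a*b^2*t*s^2 + 6*a*b^2*t*s^3 + 6*a*b^2*t^2*s^2 + 6*a*b^2*c*t*s^2 + (-12)*a*b^2*c*t*s^3 + 6*a*b^2*c*t*s^4 + (-12)*a*b^2*c*t^2*s^2 + 12*a*b^2*c*t^2*s^3 + 6*a*b^2*c*t^3*s^2 + 4*a*b^3*t*s^3 + (-4)*a*b^3*t*s^4 + (-4)*a*b^3*t^2*s^3 + a^2*t^2 + (-1)*a^2*t^2*s + (-1)*a^2*t^3 + (-3)*a^2*c*t^2 + 6*a^2*c*t^2*s + (-3)*a^2*c*t^2*s^2 + 6*a^2*c*t^3 + (-6)*a^2*c*t^3*s + (-3)*a^2*c*t^4 + 2*a^2*c^2*t^2 + (-6)*a^2*c^2*t^2*s + 6*a^2*c^2*t^2*s^2 + (-2)*a^2*c^2*t^2*s^3 + (-6)*a^2*c^2*t^3 + 12*a^2*c^2*t^3*s + (-6)*a^2*c^2*t^3*s^2 + 6*a^2*c^2*t^4 + (-6)*a^2*c^2*t^4*s + (-2)*a^2*c^2*t^5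 + (-6)*a^2*b*t^2*s + 6*a^2*b*t^2*s^2 + 6*a^2*b*t^3*s + 6*a^2*b*c*t^2*s + (-12)*a^2*b*c*t^2*s^2 + 6*a^2*b*c*t^2*s^3 + (-12)*a^2*b*c*t^3*s + 12*a^2*b*c*t^3*s^2 + 6*a^2*b*c*t^4*s + 6*a^2*b^2*t^2*s^2 + (-6)*a^2*b^2*t^2*s^3 + (-6)*a^2*b^2*t^3*s^2 + (-2)*a^3*t^3 + 2*a^3*t^3*s + 2*a^3*t^4 + 2*a^3*c*t^3 + (-4)*a^3*c*t^3*s + 2*a^3*c*t^3*s^2 + (-4)*a^3*c*t^4 + 4*a^3*c*t^4*s + 2*a^3*c*t^5 + 4*a^3*b*t^3*s + (-4)*a^3*b*t^3*s^2 + (-4)*a^3*b*t^4*s + a^4*t^4 + (-1)*a^4*t^4*s + (-1)*a^4*t^5 + u0*c + (-2)*u0*c*s + u0*c*s^2 + (-2)*u0*c*t + 2*u0*c*t*s + u0*c*t^2 + (-2)*u0*c^2 + 6*u0*c^2*s + (-6)*u0*c^2*s^2 + 2*u0*c^2*s^3 + 6*u0*c^2*t + (-12)*u0*c^2*t*s + 6*u0*c^2*t*s^2 + (-6)*u0*c^2*t^2 + 6*u0*c^2*t^2*s + 2*u0*c^2*t^3 + u0*c^3 + (-4)*u0*c^3*s + 6*u0*c^3*s^2 + (-4)*u0*c^3*s^3 + u0*c^3*s^4 + (-4)*u0*c^3*t + 12*u0*c^3*t*s + (-12)*u0*c^3*t*s^2 + 4*u0*c^3*t*s^3 + 6*u0*c^3*t^2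 + (-12)*u0*c^3*t^2*s + 6*u0*c^3*t^2*s^2 + (-4)*u0*c^3*t^3 + 4*u0*c^3*t^3*s + u0*c^3*t^4 + 2*u0*b*s + (-2)*u0*b*s^2 + (-2)*u0*b*t*s + (-6)*u0*b*c*s + 12*u0*b*c*s^2 + (-6)*u0*b*c*s^3 + 12*u0*b*c*t*s + (-12)*u0*b*c*t*s^2 + (-6)*u0*b*c*t^2*s + 4*u0*b*c^2*s + (-12)*u0*b*c^2*s^2 + 12*u0*b*c^2*s^3 + (-4)*u0*b*c^2*s^4 + (-12)*u0*b*c^2*t*s + 24*u0*b*c^2*t*s^2 + (-12)*u0*b*c^2*t*s^3 + 12*u0*b*c^2*t^2*s + (-12)*u0*b*c^2*t^2*s^2 + (-4)*u0*b*c^2*t^3*s + (-6)*u0*b^2*s^2 + 6*u0*b^2*s^3 + 6*u0*b^2*t*s^2 + 6*u0*b^2*c*s^2 + (-12)*u0*b^2*c*s^3 + 6*u0*b^2*c*s^4 + (-12)*u0*b^2*c*t*s^2 + 12*u0*b^2*c*t*s^3 + 6*u0*b^2*c*t^2*s^2 + 4*u0*b^3*s^3 + (-4)*u0*b^3*s^4 + (-4)*u0*b^3*t*s^3 + 2*u0*a*t + (-2)*u0*a*t*s + (-2)*u0*a*t^2 + (-6)*u0*a*c*t + 12*u0*a*c*t*s + (-6)*u0*a*c*t*s^2 + 12*u0*a*c*t^2 + (-12)*u0*a*c*t^2*s + (-6)*u0*a*c*t^3 + 4*u0*a*c^2*t + (-12)*u0*a*c^2*t*s + 12*u0*a*c^2*t*s^2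 + (-4)*u0*a*c^2*t*s^3 + (-12)*u0*a*c^2*t^2 + 24*u0*a*c^2*t^2*s + (-12)*u0*a*c^2*t^2*s^2 + 12*u0*a*c^2*t^3 + (-12)*u0*a*c^2*t^3*s + (-4)*u0*a*c^2*t^4 + (-12)*u0*a*b*t*s + 12*u0*a*b*t*s^2 + 12*u0*a*b*t^2*s + 12*u0*a*b*c*t*s + (-24)*u0*a*b*c*t*s^2 + 12*u0*a*b*c*t*s^3 + (-24)*u0*a*b*c*t^2*s + 24*u0*a*b*c*t^2*s^2 + 12*u0*a*b*c*t^3*s + 12*u0*a*b^2*t*s^2 + (-12)*u0*a*b^2*t*s^3 + (-12)*u0*a*b^2*t^2*s^2 + (-6)*u0*a^2*t^2 + 6*u0*a^2*t^2*s + 6*u0*a^2*t^3 + 6*u0*a^2*c*t^2 + (-12)*u0*a^2*c*t^2*s + 6*u0*a^2*c*t^2*s^2 + (-12)*u0*a^2*c*t^3 + 12*u0*a^2*c*t^3*s + 6*u0*a^2*c*t^4 + 12*u0*a^2*b*t^2*s + (-12)*u0*a^2*b*t^2*s^2 + (-12)*u0*a^2*b*t^3*s + 4*u0*a^3*t^3 + (-4)*u0*a^3*t^3*s + (-4)*u0*a^3*t^4 + u0^2 + (-1)*u0^2*s + (-1)*u0^2*t + (-3)*u0^2*c + 6*u0^2*c*s + (-3)*u0^2*c*s^2 + 6*u0^2*c*t + (-6)*u0^2*c*t*s + (-3)*u0^2*c*t^2 + 2*u0^2*c^2 + (-6)*u0^2*c^2*s + 6*u0^2*c^2*s^2 + (-2)*u0^2*c^2*s^3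 + (-6)*u0^2*c^2*t + 12*u0^2*c^2*t*s + (-6)*u0^2*c^2*t*s^2 + 6*u0^2*c^2*t^2 + (-6)*u0^2*c^2*t^2*s + (-2)*u0^2*c^2*t^3 + (-6)*u0^2*b*s + 6*u0^2*b*s^2 + 6*u0^2*b*t*s + 6*u0^2*b*c*s + (-12)*u0^2*b*c*s^2 + 6*u0^2*b*c*s^3 + (-12)*u0^2*b*c*t*s + 12*u0^2*b*c*t*s^2 + 6*u0^2*b*c*t^2*s + 6*u0^2*b^2*s^2 + (-6)*u0^2*b^2*s^3 + (-6)*u0^2*b^2*t*s^2 + (-6)*u0^2*a*t + 6*u0^2*a*t*s + 6*u0^2*a*t^2 + 6*u0^2*a*c*t + (-12)*u0^2*a*c*t*s + 6*u0^2*a*c*t*s^2 + (-12)*u0^2*a*c*t^2 + 12*u0^2*a*c*t^2*s + 6*u0^2*a*c*t^3 + 12*u0^2*a*b*t*s + (-12)*u0^2*a*b*t*s^2 + (-12)*u0^2*a*b*t^2*s + 6*u0^2*a^2*t^2 + (-6)*u0^2*a^2*t^2*s + (-6)*u0^2*a^2*t^3 + (-2)*u0^3 + 2*u0^3*s + 2*u0^3*t + 2*u0^3*c + (-4)*u0^3*c*s + 2*u0^3*c*s^2 + (-4)*u0^3*c*t + 4*u0^3*c*t*s + 2*u0^3*c*t^2 + 4*u0^3*b*s + (-4)*u0^3*b*s^2 + (-4)*u0^3*b*t*s + 4*u0^3*a*t + (-4)*u0^3*a*t*s + (-4)*u0^3*a*t^2 + u0^4 + (-1)*u0^4*s + (-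1)*u0^4*t.
Definition A3_1 (u0 a b c t s : R) : R := (1/3)*c^2*s + (-1/2)*c^2*s^2 + (1/3)*c^2*s^3 + (-1/12)*c^2*s^4 + (-1)*c^2*t*s + c^2*t*s^2 + (-1/3)*c^2*t*s^3 + c^2*t^2*s + (-1/2)*c^2*t^2*s^2 + (-1/3)*c^2*t^3*s + (-1/2)*c^3*s + c^3*s^2 + (-1)*c^3*s^3 + (1/2)*c^3*s^4 + (-1/10)*c^3*s^5 + 2*c^3*t*s + (-3)*c^3*t*s^2 + 2*c^3*t*s^3 + (-1/2)*c^3*t*s^4 + (-3)*c^3*t^2*s + 3*c^3*t^2*s^2 + (-1)*c^3*t^2*s^3 + 2*c^3*t^3*s + (-1)*c^3*t^3*s^2 + (-1/2)*c^3*t^4*s + (1/5)*c^4*s + (-1/2)*c^4*s^2 + (2/3)*c^4*s^3 + (-1/2)*c^4*s^4 + (1/5)*c^4*s^5 + (-1/30)*c^4*s^6 + (-1)*c^4*t*s + 2*c^4*t*s^2 + (-2)*c^4*t*s^3 + c^4*t*s^4 + (-1/5)*c^4*t*s^5 + 2*c^4*t^2*s + (-3)*c^4*t^2*s^2 + 2*c^4*t^2*s^3 + (-1/2)*c^4*t^2*s^4 + (-2)*c^4*t^3*s + 2*c^4*t^3*s^2 + (-2/3)*c^4*t^3*s^3 + c^4*t^4*s + (-1/2)*c^4*t^4*s^2 + (-1/5)*c^4*t^5*s + (1/2)*b*c*s^2 + (-2/3)*b*c*s^3 + (1/4)*b*c*s^4 + (-1)*b*c*t*s^2 + (2/3)*b*c*t*s^3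 + (1/2)*b*c*t^2*s^2 + (-1)*b*c^2*s^2 + 2*b*c^2*s^3 + (-3/2)*b*c^2*s^4 + (2/5)*b*c^2*s^5 + 3*b*c^2*t*s^2 + (-4)*b*c^2*t*s^3 + (3/2)*b*c^2*t*s^4 + (-3)*b*c^2*t^2*s^2 + 2*b*c^2*t^2*s^3 + b*c^2*t^3*s^2 + (1/2)*b*c^3*s^2 + (-4/3)*b*c^3*s^3 + (3/2)*b*c^3*s^4 + (-4/5)*b*c^3*s^5 + (1/6)*b*c^3*s^6 + (-2)*b*c^3*t*s^2 + 4*b*c^3*t*s^3 + (-3)*b*c^3*t*s^4 + (4/5)*b*c^3*t*s^5 + 3*b*c^3*t^2*s^2 + (-4)*b*c^3*t^2*s^3 + (3/2)*b*c^3*t^2*s^4 + (-2)*b*c^3*t^3*s^2 + (4/3)*b*c^3*t^3*s^3 + (1/2)*b*c^3*t^4*s^2 + (1/3)*b^2*s^3 + (-1/4)*b^2*s^4 + (-1/3)*b^2*t*s^3 + (-1)*b^2*c*s^3 + (3/2)*b^2*c*s^4 + (-3/5)*b^2*c*s^5 + 2*b^2*c*t*s^3 + (-3/2)*b^2*c*t*s^4 + (-1)*b^2*c*t^2*s^3 + (2/3)*b^2*c^2*s^3 + (-3/2)*b^2*c^2*s^4 + (6/5)*b^2*c^2*s^5 + (-1/3)*b^2*c^2*s^6 + (-2)*b^2*c^2*t*s^3 + 3*b^2*c^2*t*s^4 + (-6/5)*b^2*c^2*t*s^5 + 2*b^2*c^2*t^2*s^3 + (-3/2)*b^2*c^2*t^2*s^4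 + (-2/3)*b^2*c^2*t^3*s^3 + (-1/2)*b^3*s^4 + (2/5)*b^3*s^5 + (1/2)*b^3*t*s^4 + (1/2)*b^3*c*s^4 + (-4/5)*b^3*c*s^5 + (1/3)*b^3*c*s^6 + (-1)*b^3*c*t*s^4 + (4/5)*b^3*c*t*s^5 + (1/2)*b^3*c*t^2*s^4 + (1/5)*b^4*s^5 + (-1/6)*b^4*s^6 + (-1/5)*b^4*t*s^5 + a*c*t*s + (-1)*a*c*t*s^2 + (1/3)*a*c*t*s^3 + (-2)*a*c*t^2*s + a*c*t^2*s^2 + a*c*t^3*s + (-2)*a*c^2*t*s + 3*a*c^2*t*s^2 + (-2)*a*c^2*t*s^3 + (1/2)*a*c^2*t*s^4 + 6*a*c^2*t^2*s + (-6)*a*c^2*t^2*s^2 + 2*a*c^2*t^2*s^3 + (-6)*a*c^2*t^3*s + 3*a*c^2*t^3*s^2 + 2*a*c^2*t^4*s + a*c^3*t*s + (-2)*a*c^3*t*s^2 + 2*a*c^3*t*s^3 + (-1)*a*c^3*t*s^4 + (1/5)*a*c^3*t*s^5 + (-4)*a*c^3*t^2*s + 6*a*c^3*t^2*s^2 + (-4)*a*c^3*t^2*s^3 + a*c^3*t^2*s^4 + 6*a*c^3*t^3*s + (-6)*a*c^3*t^3*s^2 + 2*a*c^3*t^3*s^3 + (-4)*a*c^3*t^4*s + 2*a*c^3*t^4*s^2 + a*c^3*t^5*s + a*b*t*s^2 + (-2/3)*a*b*t*s^3 + (-1)*a*b*t^2*s^2 + (-3)*a*b*c*t*s^2 + 4*a*b*c*t*s^3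 + (-3/2)*a*b*c*t*s^4 + 6*a*b*c*t^2*s^2 + (-4)*a*b*c*t^2*s^3 + (-3)*a*b*c*t^3*s^2 + 2*a*b*c^2*t*s^2 + (-4)*a*b*c^2*t*s^3 + 3*a*b*c^2*t*s^4 + (-4/5)*a*b*c^2*t*s^5 + (-6)*a*b*c^2*t^2*s^2 + 8*a*b*c^2*t^2*s^3 + (-3)*a*b*c^2*t^2*s^4 + 6*a*b*c^2*t^3*s^2 + (-4)*a*b*c^2*t^3*s^3 + (-2)*a*b*c^2*t^4*s^2 + (-2)*a*b^2*t*s^3 + (3/2)*a*b^2*t*s^4 + 2*a*b^2*t^2*s^3 + 2*a*b^2*c*t*s^3 + (-3)*a*b^2*c*t*s^4 + (6/5)*a*b^2*c*t*s^5 + (-4)*a*b^2*c*t^2*s^3 + 3*a*b^2*c*t^2*s^4 + 2*a*b^2*c*t^3*s^3 + a*b^3*t*s^4 + (-4/5)*a*b^3*t*s^5 + (-1)*a*b^3*t^2*s^4 + a^2*t^2*s + (-1/2)*a^2*t^2*s^2 + (-1)*a^2*t^3*s + (-3)*a^2*c*t^2*s + 3*a^2*c*t^2*s^2 + (-1)*a^2*c*t^2*s^3 + 6*a^2*c*t^3*s + (-3)*a^2*c*t^3*s^2 + (-3)*a^2*c*t^4*s + 2*a^2*c^2*t^2*s + (-3)*a^2*c^2*t^2*s^2 + 2*a^2*c^2*t^2*s^3 + (-1/2)*a^2*c^2*t^2*s^4 + (-6)*a^2*c^2*t^3*s + 6*a^2*c^2*t^3*s^2 + (-2)*a^2*c^2*t^3*s^3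 + 6*a^2*c^2*t^4*s + (-3)*a^2*c^2*t^4*s^2 + (-2)*a^2*c^2*t^5*s + (-3)*a^2*b*t^2*s^2 + 2*a^2*b*t^2*s^3 + 3*a^2*b*t^3*s^2 + 3*a^2*b*c*t^2*s^2 + (-4)*a^2*b*c*t^2*s^3 + (3/2)*a^2*b*c*t^2*s^4 + (-6)*a^2*b*c*t^3*s^2 + 4*a^2*b*c*t^3*s^3 + 3*a^2*b*c*t^4*s^2 + 2*a^2*b^2*t^2*s^3 + (-3/2)*a^2*b^2*t^2*s^4 + (-2)*a^2*b^2*t^3*s^3 + (-2)*a^3*t^3*s + a^3*t^3*s^2 + 2*a^3*t^4*s + 2*a^3*c*t^3*s + (-2)*a^3*c*t^3*s^2 + (2/3)*a^3*c*t^3*s^3 + (-4)*a^3*c*t^4*s + 2*a^3*c*t^4*s^2 + 2*a^3*c*t^5*s + 2*a^3*b*t^3*s^2 + (-4/3)*a^3*b*t^3*s^3 + (-2)*a^3*b*t^4*s^2 + a^4*t^4*s + (-1/2)*a^4*t^4*s^2 + (-1)*a^4*t^5*s + u0*c*s + (-1)*u0*c*s^2 + (1/3)*u0*c*s^3 + (-2)*u0*c*t*s + u0*c*t*s^2 + u0*c*t^2*s + (-2)*u0*c^2*s + 3*u0*c^2*s^2 + (-2)*u0*c^2*s^3 + (1/2)*u0*c^2*s^4 + 6*u0*c^2*t*s + (-6)*u0*c^2*t*s^2 + 2*u0*c^2*t*s^3 + (-6)*u0*c^2*t^2*s + 3*u0*c^2*t^2*s^2 + 2*u0*c^2*t^3*s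 + u0*c^3*s + (-2)*u0*c^3*s^2 + 2*u0*c^3*s^3 + (-1)*u0*c^3*s^4 + (1/5)*u0*c^3*s^5 + (-4)*u0*c^3*t*s + 6*u0*c^3*t*s^2 + (-4)*u0*c^3*t*s^3 + u0*c^3*t*s^4 + 6*u0*c^3*t^2*s + (-6)*u0*c^3*t^2*s^2 + 2*u0*c^3*t^2*s^3 + (-4)*u0*c^3*t^3*s + 2*u0*c^3*t^3*s^2 + u0*c^3*t^4*s + u0*b*s^2 + (-2/3)*u0*b*s^3 + (-1)*u0*b*t*s^2 + (-3)*u0*b*c*s^2 + 4*u0*b*c*s^3 + (-3/2)*u0*b*c*s^4 + 6*u0*b*c*t*s^2 + (-4)*u0*b*c*t*s^3 + (-3)*u0*b*c*t^2*s^2 + 2*u0*b*c^2*s^2 + (-4)*u0*b*c^2*s^3 + 3*u0*b*c^2*s^4 + (-4/5)*u0*b*c^2*s^5 + (-6)*u0*b*c^2*t*s^2 + 8*u0*b*c^2*t*s^3 + (-3)*u0*b*c^2*t*s^4 + 6*u0*b*c^2*t^2*s^2 + (-4)*u0*b*c^2*t^2*s^3 + (-2)*u0*b*c^2*t^3*s^2 + (-2)*u0*b^2*s^3 + (3/2)*u0*b^2*s^4 + 2*u0*b^2*t*s^3 + 2*u0*b^2*c*s^3 + (-3)*u0*b^2*c*s^4 + (6/5)*u0*b^2*c*s^5 + (-4)*u0*b^2*c*t*s^3 + 3*u0*b^2*c*t*s^4 + 2*u0*b^2*c*t^2*s^3 + u0*b^3*s^4 + (-4/5)*u0*b^3*s^5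 + (-1)*u0*b^3*t*s^4 + 2*u0*a*t*s + (-1)*u0*a*t*s^2 + (-2)*u0*a*t^2*s + (-6)*u0*a*c*t*s + 6*u0*a*c*t*s^2 + (-2)*u0*a*c*t*s^3 + 12*u0*a*c*t^2*s + (-6)*u0*a*c*t^2*s^2 + (-6)*u0*a*c*t^3*s + 4*u0*a*c^2*t*s + (-6)*u0*a*c^2*t*s^2 + 4*u0*a*c^2*t*s^3 + (-1)*u0*a*c^2*t*s^4 + (-12)*u0*a*c^2*t^2*s + 12*u0*a*c^2*t^2*s^2 + (-4)*u0*a*c^2*t^2*s^3 + 12*u0*a*c^2*t^3*s + (-6)*u0*a*c^2*t^3*s^2 + (-4)*u0*a*c^2*t^4*s + (-6)*u0*a*b*t*s^2 + 4*u0*a*b*t*s^3 + 6*u0*a*b*t^2*s^2 + 6*u0*a*b*c*t*s^2 + (-8)*u0*a*b*c*t*s^3 + 3*u0*a*b*c*t*s^4 + (-12)*u0*a*b*c*t^2*s^2 + 8*u0*a*b*c*t^2*s^3 + 6*u0*a*b*c*t^3*s^2 + 4*u0*a*b^2*t*s^3 + (-3)*u0*a*b^2*t*s^4 + (-4)*u0*a*b^2*t^2*s^3 + (-6)*u0*a^2*t^2*s + 3*u0*a^2*t^2*s^2 + 6*u0*a^2*t^3*s + 6*u0*a^2*c*t^2*s + (-6)*u0*a^2*c*t^2*s^2 + 2*u0*a^2*c*t^2*s^3 + (-12)*u0*a^2*c*t^3*s + 6*u0*a^2*c*t^3*s^2 + 6*u0*a^2*c*t^4*s + 6*u0*a^2*b*t^2*s^2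 + (-4)*u0*a^2*b*t^2*s^3 + (-6)*u0*a^2*b*t^3*s^2 + 4*u0*a^3*t^3*s + (-2)*u0*a^3*t^3*s^2 + (-4)*u0*a^3*t^4*s + u0^2*s + (-1/2)*u0^2*s^2 + (-1)*u0^2*t*s + (-3)*u0^2*c*s + 3*u0^2*c*s^2 + (-1)*u0^2*c*s^3 + 6*u0^2*c*t*s + (-3)*u0^2*c*t*s^2 + (-3)*u0^2*c*t^2*s + 2*u0^2*c^2*s + (-3)*u0^2*c^2*s^2 + 2*u0^2*c^2*s^3 + (-1/2)*u0^2*c^2*s^4 + (-6)*u0^2*c^2*t*s + 6*u0^2*c^2*t*s^2 + (-2)*u0^2*c^2*t*s^3 + 6*u0^2*c^2*t^2*s + (-3)*u0^2*c^2*t^2*s^2 + (-2)*u0^2*c^2*t^3*s + (-3)*u0^2*b*s^2 + 2*u0^2*b*s^3 + 3*u0^2*b*t*s^2 + 3*u0^2*b*c*s^2 + (-4)*u0^2*b*c*s^3 + (3/2)*u0^2*b*c*s^4 + (-6)*u0^2*b*c*t*s^2 + 4*u0^2*b*c*t*s^3 + 3*u0^2*b*c*t^2*s^2 + 2*u0^2*b^2*s^3 + (-3/2)*u0^2*b^2*s^4 + (-2)*u0^2*b^2*t*s^3 + (-6)*u0^2*a*t*s + 3*u0^2*a*t*s^2 + 6*u0^2*a*t^2*s + 6*u0^2*a*c*t*s + (-6)*u0^2*a*c*t*s^2 + 2*u0^2*a*c*t*s^3 + (-12)*u0^2*a*c*t^2*s + 6*u0^2*a*c*t^2*s^2 + 6*u0^2*a*c*t^3*s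 + 6*u0^2*a*b*t*s^2 + (-4)*u0^2*a*b*t*s^3 + (-6)*u0^2*a*b*t^2*s^2 + 6*u0^2*a^2*t^2*s + (-3)*u0^2*a^2*t^2*s^2 + (-6)*u0^2*a^2*t^3*s + (-2)*u0^3*s + u0^3*s^2 + 2*u0^3*t*s + 2*u0^3*c*s + (-2)*u0^3*c*s^2 + (2/3)*u0^3*c*s^3 + (-4)*u0^3*c*t*s + 2*u0^3*c*t*s^2 + 2*u0^3*c*t^2*s + 2*u0^3*b*s^2 + (-4/3)*u0^3*b*s^3 + (-2)*u0^3*b*t*s^2 + 4*u0^3*a*t*s + (-2)*u0^3*a*t*s^2 + (-4)*u0^3*a*t^2*s + u0^4*s + (-1/2)*u0^4*s^2 + (-1)*u0^4*t*s.
Definition P3_1 (u0 a b c t : R) : R := (1/12)*c^2 + (-1/3)*c^2*t + (1/2)*c^2*t^2 + (-1/3)*c^2*t^3 + (1/12)*c^2*t^4 + (-1/10)*c^3 + (1/2)*c^3*t + (-1)*c^3*t^2 + c^3*t^3 + (-1/2)*c^3*t^4 + (1/10)*c^3*t^5 + (1/30)*c^4 + (-1/5)*c^4*t + (1/2)*c^4*t^2 + (-2/3)*c^4*t^3 + (1/2)*c^4*t^4 + (-1/5)*c^4*t^5 + (1/30)*c^4*t^6 + (1/12)*b*c + (-1/3)*b*c*t + (1/2)*b*c*t^2 + (-1/3)*b*c*t^3 + (1/12)*b*c*t^4 + (-1/10)*b*c^2 + (1/2)*b*c^2*t + (-1)*b*c^2*t^2 + b*c^2*t^3 + (-1/2)*b*c^2*t^4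 + (1/10)*b*c^2*t^5 + (1/30)*b*c^3 + (-1/5)*b*c^3*t + (1/2)*b*c^3*t^2 + (-2/3)*b*c^3*t^3 + (1/2)*b*c^3*t^4 + (-1/5)*b*c^3*t^5 + (1/30)*b*c^3*t^6 + (1/12)*b^2 + (-1/3)*b^2*t + (1/2)*b^2*t^2 + (-1/3)*b^2*t^3 + (1/12)*b^2*t^4 + (-1/10)*b^2*c + (1/2)*b^2*c*t + (-1)*b^2*c*t^2 + b^2*c*t^3 + (-1/2)*b^2*c*t^4 + (1/10)*b^2*c*t^5 + (1/30)*b^2*c^2 + (-1/5)*b^2*c^2*t + (1/2)*b^2*c^2*t^2 + (-2/3)*b^2*c^2*t^3 + (1/2)*b^2*c^2*t^4 + (-1/5)*b^2*c^2*t^5 + (1/30)*b^2*c^2*t^6 + (-1/10)*b^3 + (1/2)*b^3*t + (-1)*b^3*t^2 + b^3*t^3 + (-1/2)*b^3*t^4 + (1/10)*b^3*t^5 + (1/30)*b^3*c + (-1/5)*b^3*c*t + (1/2)*b^3*c*t^2 + (-2/3)*b^3*c*t^3 + (1/2)*b^3*c*t^4 + (-1/5)*b^3*c*t^5 + (1/30)*b^3*c*t^6 + (1/30)*b^4 + (-1/5)*b^4*t + (1/2)*b^4*t^2 + (-2/3)*b^4*t^3 + (1/2)*b^4*t^4 + (-1/5)*b^4*t^5 + (1/30)*b^4*t^6 + (1/3)*a*c*t + (-1)*a*c*t^2 + a*c*t^3 + (-1/3)*a*c*t^4 + (-1/2)*a*c^2*t + 2*a*c^2*t^2 + (-3)*a*c^2*t^3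 + 2*a*c^2*t^4 + (-1/2)*a*c^2*t^5 + (1/5)*a*c^3*t + (-1)*a*c^3*t^2 + 2*a*c^3*t^3 + (-2)*a*c^3*t^4 + a*c^3*t^5 + (-1/5)*a*c^3*t^6 + (1/3)*a*b*t + (-1)*a*b*t^2 + a*b*t^3 + (-1/3)*a*b*t^4 + (-1/2)*a*b*c*t + 2*a*b*c*t^2 + (-3)*a*b*c*t^3 + 2*a*b*c*t^4 + (-1/2)*a*b*c*t^5 + (1/5)*a*b*c^2*t + (-1)*a*b*c^2*t^2 + 2*a*b*c^2*t^3 + (-2)*a*b*c^2*t^4 + a*b*c^2*t^5 + (-1/5)*a*b*c^2*t^6 + (-1/2)*a*b^2*t + 2*a*b^2*t^2 + (-3)*a*b^2*t^3 + 2*a*b^2*t^4 + (-1/2)*a*b^2*t^5 + (1/5)*a*b^2*c*t + (-1)*a*b^2*c*t^2 + 2*a*b^2*c*t^3 + (-2)*a*b^2*c*t^4 + a*b^2*c*t^5 + (-1/5)*a*b^2*c*t^6 + (1/5)*a*b^3*t + (-1)*a*b^3*t^2 + 2*a*b^3*t^3 + (-2)*a*b^3*t^4 + a*b^3*t^5 + (-1/5)*a*b^3*t^6 + (1/2)*a^2*t^2 + (-1)*a^2*t^3 + (1/2)*a^2*t^4 + (-1)*a^2*c*t^2 + 3*a^2*c*t^3 + (-3)*a^2*c*t^4 + a^2*c*t^5 + (1/2)*a^2*c^2*t^2 + (-2)*a^2*c^2*t^3 + 3*a^2*c^2*t^4 + (-2)*a^2*c^2*t^5 + (1/2)*a^2*c^2*t^6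 + (-1)*a^2*b*t^2 + 3*a^2*b*t^3 + (-3)*a^2*b*t^4 + a^2*b*t^5 + (1/2)*a^2*b*c*t^2 + (-2)*a^2*b*c*t^3 + 3*a^2*b*c*t^4 + (-2)*a^2*b*c*t^5 + (1/2)*a^2*b*c*t^6 + (1/2)*a^2*b^2*t^2 + (-2)*a^2*b^2*t^3 + 3*a^2*b^2*t^4 + (-2)*a^2*b^2*t^5 + (1/2)*a^2*b^2*t^6 + (-1)*a^3*t^3 + 2*a^3*t^4 + (-1)*a^3*t^5 + (2/3)*a^3*c*t^3 + (-2)*a^3*c*t^4 + 2*a^3*c*t^5 + (-2/3)*a^3*c*t^6 + (2/3)*a^3*b*t^3 + (-2)*a^3*b*t^4 + 2*a^3*b*t^5 + (-2/3)*a^3*b*t^6 + (1/2)*a^4*t^4 + (-1)*a^4*t^5 + (1/2)*a^4*t^6 + (1/3)*u0*c + (-1)*u0*c*t + u0*c*t^2 + (-1/3)*u0*c*t^3 + (-1/2)*u0*c^2 + 2*u0*c^2*t + (-3)*u0*c^2*t^2 + 2*u0*c^2*t^3 + (-1/2)*u0*c^2*t^4 + (1/5)*u0*c^3 + (-1)*u0*c^3*t + 2*u0*c^3*t^2 + (-2)*u0*c^3*t^3 + u0*c^3*t^4 + (-1/5)*u0*c^3*t^5 + (1/3)*u0*b + (-1)*u0*b*t + u0*b*t^2 + (-1/3)*u0*b*t^3 + (-1/2)*u0*b*c + 2*u0*b*c*t + (-3)*u0*b*c*t^2 + 2*u0*b*c*t^3 + (-1/2)*u0*b*c*t^4 + (1/5)*u0*b*c^2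 + (-1)*u0*b*c^2*t + 2*u0*b*c^2*t^2 + (-2)*u0*b*c^2*t^3 + u0*b*c^2*t^4 + (-1/5)*u0*b*c^2*t^5 + (-1/2)*u0*b^2 + 2*u0*b^2*t + (-3)*u0*b^2*t^2 + 2*u0*b^2*t^3 + (-1/2)*u0*b^2*t^4 + (1/5)*u0*b^2*c + (-1)*u0*b^2*c*t + 2*u0*b^2*c*t^2 + (-2)*u0*b^2*c*t^3 + u0*b^2*c*t^4 + (-1/5)*u0*b^2*c*t^5 + (1/5)*u0*b^3 + (-1)*u0*b^3*t + 2*u0*b^3*t^2 + (-2)*u0*b^3*t^3 + u0*b^3*t^4 + (-1/5)*u0*b^3*t^5 + u0*a*t + (-2)*u0*a*t^2 + u0*a*t^3 + (-2)*u0*a*c*t + 6*u0*a*c*t^2 + (-6)*u0*a*c*t^3 + 2*u0*a*c*t^4 + u0*a*c^2*t + (-4)*u0*a*c^2*t^2 + 6*u0*a*c^2*t^3 + (-4)*u0*a*c^2*t^4 + u0*a*c^2*t^5 + (-2)*u0*a*b*t + 6*u0*a*b*t^2 + (-6)*u0*a*b*t^3 + 2*u0*a*b*t^4 + u0*a*b*c*t + (-4)*u0*a*b*c*t^2 + 6*u0*a*b*c*t^3 + (-4)*u0*a*b*c*t^4 + u0*a*b*c*t^5 + u0*a*b^2*t + (-4)*u0*a*b^2*t^2 + 6*u0*a*b^2*t^3 + (-4)*u0*a*b^2*t^4 + u0*a*b^2*t^5 + (-3)*u0*a^2*t^2 + 6*u0*a^2*t^3 + (-3)*u0*a^2*t^4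 + 2*u0*a^2*c*t^2 + (-6)*u0*a^2*c*t^3 + 6*u0*a^2*c*t^4 + (-2)*u0*a^2*c*t^5 + 2*u0*a^2*b*t^2 + (-6)*u0*a^2*b*t^3 + 6*u0*a^2*b*t^4 + (-2)*u0*a^2*b*t^5 + 2*u0*a^3*t^3 + (-4)*u0*a^3*t^4 + 2*u0*a^3*t^5 + (1/2)*u0^2 + (-1)*u0^2*t + (1/2)*u0^2*t^2 + (-1)*u0^2*c + 3*u0^2*c*t + (-3)*u0^2*c*t^2 + u0^2*c*t^3 + (1/2)*u0^2*c^2 + (-2)*u0^2*c^2*t + 3*u0^2*c^2*t^2 + (-2)*u0^2*c^2*t^3 + (1/2)*u0^2*c^2*t^4 + (-1)*u0^2*b + 3*u0^2*b*t + (-3)*u0^2*b*t^2 + u0^2*b*t^3 + (1/2)*u0^2*b*c + (-2)*u0^2*b*c*t + 3*u0^2*b*c*t^2 + (-2)*u0^2*b*c*t^3 + (1/2)*u0^2*b*c*t^4 + (1/2)*u0^2*b^2 + (-2)*u0^2*b^2*t + 3*u0^2*b^2*t^2 + (-2)*u0^2*b^2*t^3 + (1/2)*u0^2*b^2*t^4 + (-3)*u0^2*a*t + 6*u0^2*a*t^2 + (-3)*u0^2*a*t^3 + 2*u0^2*a*c*t + (-6)*u0^2*a*c*t^2 + 6*u0^2*a*c*t^3 + (-2)*u0^2*a*c*t^4 + 2*u0^2*a*b*t + (-6)*u0^2*a*b*t^2 + 6*u0^2*a*b*t^3 + (-2)*u0^2*a*b*t^4 + 3*u0^2*a^2*t^2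 + (-6)*u0^2*a^2*t^3 + 3*u0^2*a^2*t^4 + (-1)*u0^3 + 2*u0^3*t + (-1)*u0^3*t^2 + (2/3)*u0^3*c + (-2)*u0^3*c*t + 2*u0^3*c*t^2 + (-2/3)*u0^3*c*t^3 + (2/3)*u0^3*b + (-2)*u0^3*b*t + 2*u0^3*b*t^2 + (-2/3)*u0^3*b*t^3 + 2*u0^3*a*t + (-4)*u0^3*a*t^2 + 2*u0^3*a*t^3 + (1/2)*u0^4 + (-1)*u0^4*t + (1/2)*u0^4*t^2.
Definition A3_0 (u0 a b c t : R) : R := (1/12)*c^2*t + (-1/6)*c^2*t^2 + (1/6)*c^2*t^3 + (-1/12)*c^2*t^4 + (1/60)*c^2*t^5 + (-1/10)*c^3*t + (1/4)*c^3*t^2 + (-1/3)*c^3*t^3 + (1/4)*c^3*t^4 + (-1/10)*c^3*t^5 + (1/60)*c^3*t^6 + (1/30)*c^4*t + (-1/10)*c^4*t^2 + (1/6)*c^4*t^3 + (-1/6)*c^4*t^4 + (1/10)*c^4*t^5 + (-1/30)*c^4*t^6 + (1/210)*c^4*t^7 + (1/12)*b*c*t + (-1/6)*b*c*t^2 + (1/6)*b*c*t^3 + (-1/12)*b*c*t^4 + (1/60)*b*c*t^5 + (-1/10)*b*c^2*t + (1/4)*b*c^2*t^2 + (-1/3)*b*c^2*t^3 + (1/4)*b*c^2*t^4 + (-1/10)*b*c^2*t^5 + (1/60)*b*c^2*t^6 + (1/30)*b*c^3*t + (-1/10)*b*c^3*t^2 + (1/6)*b*c^3*t^3 + (-1/6)*b*c^3*t^4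 + (1/10)*b*c^3*t^5 + (-1/30)*b*c^3*t^6 + (1/210)*b*c^3*t^7 + (1/12)*b^2*t + (-1/6)*b^2*t^2 + (1/6)*b^2*t^3 + (-1/12)*b^2*t^4 + (1/60)*b^2*t^5 + (-1/10)*b^2*c*t + (1/4)*b^2*c*t^2 + (-1/3)*b^2*c*t^3 + (1/4)*b^2*c*t^4 + (-1/10)*b^2*c*t^5 + (1/60)*b^2*c*t^6 + (1/30)*b^2*c^2*t + (-1/10)*b^2*c^2*t^2 + (1/6)*b^2*c^2*t^3 + (-1/6)*b^2*c^2*t^4 + (1/10)*b^2*c^2*t^5 + (-1/30)*b^2*c^2*t^6 + (1/210)*b^2*c^2*t^7 + (-1/10)*b^3*t + (1/4)*b^3*t^2 + (-1/3)*b^3*t^3 + (1/4)*b^3*t^4 + (-1/10)*b^3*t^5 + (1/60)*b^3*t^6 + (1/30)*b^3*c*t + (-1/10)*b^3*c*t^2 + (1/6)*b^3*c*t^3 + (-1/6)*b^3*c*t^4 + (1/10)*b^3*c*t^5 + (-1/30)*b^3*c*t^6 + (1/210)*b^3*c*t^7 + (1/30)*b^4*t + (-1/10)*b^4*t^2 + (1/6)*b^4*t^3 + (-1/6)*b^4*t^4 + (1/10)*b^4*t^5 + (-1/30)*b^4*t^6 + (1/210)*b^4*t^7 + (1/6)*a*c*t^2 + (-1/3)*a*c*t^3 + (1/4)*a*c*t^4 + (-1/15)*a*c*t^5 + (-1/4)*a*c^2*t^2 + (2/3)*a*c^2*t^3 + (-3/4)*a*c^2*t^4 + (2/5)*a*c^2*t^5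 + (-1/12)*a*c^2*t^6 + (1/10)*a*c^3*t^2 + (-1/3)*a*c^3*t^3 + (1/2)*a*c^3*t^4 + (-2/5)*a*c^3*t^5 + (1/6)*a*c^3*t^6 + (-1/35)*a*c^3*t^7 + (1/6)*a*b*t^2 + (-1/3)*a*b*t^3 + (1/4)*a*b*t^4 + (-1/15)*a*b*t^5 + (-1/4)*a*b*c*t^2 + (2/3)*a*b*c*t^3 + (-3/4)*a*b*c*t^4 + (2/5)*a*b*c*t^5 + (-1/12)*a*b*c*t^6 + (1/10)*a*b*c^2*t^2 + (-1/3)*a*b*c^2*t^3 + (1/2)*a*b*c^2*t^4 + (-2/5)*a*b*c^2*t^5 + (1/6)*a*b*c^2*t^6 + (-1/35)*a*b*c^2*t^7 + (-1/4)*a*b^2*t^2 + (2/3)*a*b^2*t^3 + (-3/4)*a*b^2*t^4 + (2/5)*a*b^2*t^5 + (-1/12)*a*b^2*t^6 + (1/10)*a*b^2*c*t^2 + (-1/3)*a*b^2*c*t^3 + (1/2)*a*b^2*c*t^4 + (-2/5)*a*b^2*c*t^5 + (1/6)*a*b^2*c*t^6 + (-1/35)*a*b^2*c*t^7 + (1/10)*a*b^3*t^2 + (-1/3)*a*b^3*t^3 + (1/2)*a*b^3*t^4 + (-2/5)*a*b^3*t^5 + (1/6)*a*b^3*t^6 + (-1/35)*a*b^3*t^7 + (1/6)*a^2*t^3 + (-1/4)*a^2*t^4 + (1/10)*a^2*t^5 + (-1/3)*a^2*c*t^3 + (3/4)*a^2*c*t^4 + (-3/5)*a^2*c*t^5 +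 (1/6)*a^2*c*t^6 + (1/6)*a^2*c^2*t^3 + (-1/2)*a^2*c^2*t^4 + (3/5)*a^2*c^2*t^5 + (-1/3)*a^2*c^2*t^6 + (1/14)*a^2*c^2*t^7 + (-1/3)*a^2*b*t^3 + (3/4)*a^2*b*t^4 + (-3/5)*a^2*b*t^5 + (1/6)*a^2*b*t^6 + (1/6)*a^2*b*c*t^3 + (-1/2)*a^2*b*c*t^4 + (3/5)*a^2*b*c*t^5 + (-1/3)*a^2*b*c*t^6 + (1/14)*a^2*b*c*t^7 + (1/6)*a^2*b^2*t^3 + (-1/2)*a^2*b^2*t^4 + (3/5)*a^2*b^2*t^5 + (-1/3)*a^2*b^2*t^6 + (1/14)*a^2*b^2*t^7 + (-1/4)*a^3*t^4 + (2/5)*a^3*t^5 + (-1/6)*a^3*t^6 + (1/6)*a^3*c*t^4 + (-2/5)*a^3*c*t^5 + (1/3)*a^3*c*t^6 + (-2/21)*a^3*c*t^7 + (1/6)*a^3*b*t^4 + (-2/5)*a^3*b*t^5 + (1/3)*a^3*b*t^6 + (-2/21)*a^3*b*t^7 + (1/10)*a^4*t^5 + (-1/6)*a^4*t^6 + (1/14)*a^4*t^7 + (1/3)*u0*c*t + (-1/2)*u0*c*t^2 + (1/3)*u0*c*t^3 + (-1/12)*u0*c*t^4 + (-1/2)*u0*c^2*t + u0*c^2*t^2 + (-1)*u0*c^2*t^3 + (1/2)*u0*c^2*t^4 + (-1/10)*u0*c^2*t^5 + (1/5)*u0*c^3*t + (-1/2)*u0*c^3*t^2 + (2/3)*u0*c^3*t^3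 + (-1/2)*u0*c^3*t^4 + (1/5)*u0*c^3*t^5 + (-1/30)*u0*c^3*t^6 + (1/3)*u0*b*t + (-1/2)*u0*b*t^2 + (1/3)*u0*b*t^3 + (-1/12)*u0*b*t^4 + (-1/2)*u0*b*c*t + u0*b*c*t^2 + (-1)*u0*b*c*t^3 + (1/2)*u0*b*c*t^4 + (-1/10)*u0*b*c*t^5 + (1/5)*u0*b*c^2*t + (-1/2)*u0*b*c^2*t^2 + (2/3)*u0*b*c^2*t^3 + (-1/2)*u0*b*c^2*t^4 + (1/5)*u0*b*c^2*t^5 + (-1/30)*u0*b*c^2*t^6 + (-1/2)*u0*b^2*t + u0*b^2*t^2 + (-1)*u0*b^2*t^3 + (1/2)*u0*b^2*t^4 + (-1/10)*u0*b^2*t^5 + (1/5)*u0*b^2*c*t + (-1/2)*u0*b^2*c*t^2 + (2/3)*u0*b^2*c*t^3 + (-1/2)*u0*b^2*c*t^4 + (1/5)*u0*b^2*c*t^5 + (-1/30)*u0*b^2*c*t^6 + (1/5)*u0*b^3*t + (-1/2)*u0*b^3*t^2 + (2/3)*u0*b^3*t^3 + (-1/2)*u0*b^3*t^4 + (1/5)*u0*b^3*t^5 + (-1/30)*u0*b^3*t^6 + (1/2)*u0*a*t^2 + (-2/3)*u0*a*t^3 + (1/4)*u0*a*t^4 + (-1)*u0*a*c*t^2 + 2*u0*a*c*t^3 + (-3/2)*u0*a*c*t^4 + (2/5)*u0*a*c*t^5 + (1/2)*u0*a*c^2*t^2 + (-4/3)*u0*a*c^2*t^3 + (3/2)*u0*a*c^2*t^4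 + (-4/5)*u0*a*c^2*t^5 + (1/6)*u0*a*c^2*t^6 + (-1)*u0*a*b*t^2 + 2*u0*a*b*t^3 + (-3/2)*u0*a*b*t^4 + (2/5)*u0*a*b*t^5 + (1/2)*u0*a*b*c*t^2 + (-4/3)*u0*a*b*c*t^3 + (3/2)*u0*a*b*c*t^4 + (-4/5)*u0*a*b*c*t^5 + (1/6)*u0*a*b*c*t^6 + (1/2)*u0*a*b^2*t^2 + (-4/3)*u0*a*b^2*t^3 + (3/2)*u0*a*b^2*t^4 + (-4/5)*u0*a*b^2*t^5 + (1/6)*u0*a*b^2*t^6 + (-1)*u0*a^2*t^3 + (3/2)*u0*a^2*t^4 + (-3/5)*u0*a^2*t^5 + (2/3)*u0*a^2*c*t^3 + (-3/2)*u0*a^2*c*t^4 + (6/5)*u0*a^2*c*t^5 + (-1/3)*u0*a^2*c*t^6 + (2/3)*u0*a^2*b*t^3 + (-3/2)*u0*a^2*b*t^4 + (6/5)*u0*a^2*b*t^5 + (-1/3)*u0*a^2*b*t^6 + (1/2)*u0*a^3*t^4 + (-4/5)*u0*a^3*t^5 + (1/3)*u0*a^3*t^6 + (1/2)*u0^2*t + (-1/2)*u0^2*t^2 + (1/6)*u0^2*t^3 + (-1)*u0^2*c*t + (3/2)*u0^2*c*t^2 + (-1)*u0^2*c*t^3 + (1/4)*u0^2*c*t^4 + (1/2)*u0^2*c^2*t + (-1)*u0^2*c^2*t^2 + u0^2*c^2*t^3 + (-1/2)*u0^2*c^2*t^4 + (1/10)*u0^2*c^2*t^5 + (-1)*u0^2*b*t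 + (3/2)*u0^2*b*t^2 + (-1)*u0^2*b*t^3 + (1/4)*u0^2*b*t^4 + (1/2)*u0^2*b*c*t + (-1)*u0^2*b*c*t^2 + u0^2*b*c*t^3 + (-1/2)*u0^2*b*c*t^4 + (1/10)*u0^2*b*c*t^5 + (1/2)*u0^2*b^2*t + (-1)*u0^2*b^2*t^2 + u0^2*b^2*t^3 + (-1/2)*u0^2*b^2*t^4 + (1/10)*u0^2*b^2*t^5 + (-3/2)*u0^2*a*t^2 + 2*u0^2*a*t^3 + (-3/4)*u0^2*a*t^4 + u0^2*a*c*t^2 + (-2)*u0^2*a*c*t^3 + (3/2)*u0^2*a*c*t^4 + (-2/5)*u0^2*a*c*t^5 + u0^2*a*b*t^2 + (-2)*u0^2*a*b*t^3 + (3/2)*u0^2*a*b*t^4 + (-2/5)*u0^2*a*b*t^5 + u0^2*a^2*t^3 + (-3/2)*u0^2*a^2*t^4 + (3/5)*u0^2*a^2*t^5 + (-1)*u0^3*t + u0^3*t^2 + (-1/3)*u0^3*t^3 + (2/3)*u0^3*c*t + (-1)*u0^3*c*t^2 + (2/3)*u0^3*c*t^3 + (-1/6)*u0^3*c*t^4 + (2/3)*u0^3*b*t + (-1)*u0^3*b*t^2 + (2/3)*u0^3*b*t^3 + (-1/6)*u0^3*b*t^4 + u0^3*a*t^2 + (-4/3)*u0^3*a*t^3 + (1/2)*u0^3*a*t^4 + (1/2)*u0^4*t + (-1/2)*u0^4*t^2 + (1/6)*u0^4*t^3.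
Definition P3_0 (u0 a b c  : R) : R := (1/60)*c^2 + (-1/60)*c^3 + (1/210)*c^4 + (1/60)*b*c + (-1/60)*b*c^2 + (1/210)*b*c^3 + (1/60)*b^2 + (-1/60)*b^2*c + (1/210)*b^2*c^2 + (-1/60)*b^3 + (1/210)*b^3*c + (1/210)*b^4 + (1/60)*a*c + (-1/60)*a*c^2 + (1/210)*a*c^3 + (1/60)*a*b + (-1/60)*a*b*c + (1/210)*a*b*c^2 + (-1/60)*a*b^2 + (1/210)*a*b^2*c + (1/210)*a*b^3 + (1/60)*a^2 + (-1/60)*a^2*c + (1/210)*a^2*c^2 + (-1/60)*a^2*b + (1/210)*a^2*b*c + (1/210)*a^2*b^2 + (-1/60)*a^3 + (1/210)*a^3*c + (1/210)*a^3*b + (1/210)*a^4 + (1/12)*u0*c + (-1/10)*u0*c^2 + (1/30)*u0*c^3 + (1/12)*u0*b + (-1/10)*u0*b*c + (1/30)*u0*b*c^2 + (-1/10)*u0*b^2 + (1/30)*u0*b^2*c + (1/30)*u0*b^3 + (1/12)*u0*a + (-1/10)*u0*a*c + (1/30)*u0*a*c^2 + (-1/10)*u0*a*b + (1/30)*u0*a*b*c + (1/30)*u0*a*b^2 + (-1/10)*u0*a^2 + (1/30)*u0*a^2*c + (1/30)*u0*a^2*b + (1/30)*u0*a^3 + (1/6)*u0^2 + (-1/4)*u0^2*c + (1/10)*u0^2*c^2 + (-1/4)*u0^2*b + (1/10)*u0^2*b*c + (1/10)*u0^2*b^2 + (-1/4)*u0^2*a + (1/10)*u0^2*a*c + (1/10)*u0^2*a*b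 + (1/10)*u0^2*a^2 + (-1/3)*u0^3 + (1/6)*u0^3*c + (1/6)*u0^3*b + (1/6)*u0^3*a + (1/6)*u0^4.
Definition M3 (z00 z01 z02 z03 z11 z12 z13 z22 z23 z33 : R) : R := (1/210)*z33^2 + (1/210)*z23*z33 + (1/315)*z23^2 + (1/630)*z22*z33 + (1/210)*z22*z23 + (1/210)*z22^2 + (1/210)*z13*z33 + (1/315)*z13*z23 + (1/630)*z13*z22 + (1/315)*z13^2 + (1/630)*z12*z33 + (1/315)*z12*z23 + (1/210)*z12*z22 + (1/315)*z12*z13 + (1/315)*z12^2 + (1/630)*z11*z33 + (1/630)*z11*z23 + (1/630)*z11*z22 + (1/210)*z11*z13 + (1/210)*z11*z12 + (1/210)*z11^2 + (1/210)*z03*z33 + (1/315)*z03*z23 + (1/630)*z03*z22 + (1/315)*z03*z13 + (1/630)*z03*z12 + (1/630)*z03*z11 + (1/315)*z03^2 + (1/630)*z02*z33 + (1/315)*z02*z23 + (1/210)*z02*z22 + (1/630)*z02*z13 + (1/315)*z02*z12 + (1/630)*z02*z11 + (1/315)*z02*z03 + (1/315)*z02^2 + (1/630)*z01*z33 + (1/630)*z01*z23 + (1/630)*z01*z22 + (1/315)*z01*z13 + (1/315)*z01*z12 + (1/210)*z01*z11 + (1/315)*z01*z03 + (1/315)*z01*z02 + (1/315)*z01^2 + (1/630)*z00*z33 + (1/630)*z00*z23 + (1/630)*z00*z22 + (1/630)*z00*z13 + (1/630)*z00*z12 + (1/630)*z00*z11 + (1/210)*z00*z03 + (1/210)*z00*z02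 + (1/210)*z00*z01 + (1/210)*z00^2.
Lemma M3_sos (z00 z01 z02 z03 z11 z12 z13 z22 z23 z33 : R) : M3 z00 z01 z02 z03 z11 z12 z13 z22 z23 z33 - (1/1000) * (z00^2 + z11^2 + z22^2 + z33^2) = (79/21000) * ((50/237)*z33 + (50/237)*z23 + (50/237)*z22 + (50/237)*z13 + (50/237)*z12 + (50/237)*z11 + (50/79)*z03 + (50/79)*z02 + (50/79)*z01 + z00)^2 + (83/49770) * ((29/166)*z33 + (29/166)*z23 + (29/166)*z22 + (54/83)*z13 + (54/83)*z12 + (187/166)*z11 + (4/83)*z03 + (4/83)*z02 + z01)^2 + (29/17430) * ((1/6)*z33 + (56/87)*z23 + (65/58)*z22 + (25/174)*z13 + (18/29)*z12 + (7/58)*z11 + (4/87)*z03 + z02)^2 + (13/7830) * ((29/26)*z33 + (8/13)*z23 + (3/26)*z22 + (8/13)*z13 + (3/26)*z12 + (3/26)*z11 + z03)^2 + (1759/1228500) * ((125/3518)*z33 + (125/3518)*z23 + (125/3518)*z22 + (2075/3518)*z13 + (2075/3518)*z12 + z11)^2 + (1123/985040) * ((185/10107)*z33 + (3703/10107)*z23 + (2407/3369)*z22 + (-149/3369)*z13 + z12)^2 + (23/20214) * ((43/60)*z33 + (23/60)*z23 + (1/20)*z22 + z13)^2 + (71/84000) * ((-5/639)*z33 + (395/639)*z23 + z22)^2 + (3427/3450600) * ((79/149)*z33 + z23)^2 + (253/447000) * (z33)^2.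
Proof. unfold M3. field. Qed.
Lemma I1 (K u0 a : R) : RInt (fun t => K * ((u0 + (0 + t * a)) ^ 2 * ((u0 + (0 + t * a)) - 1) ^ 2)) 0 (1) = K * P1_0 u0 a.
Proof.
  { 
    apply is_RInt_unique. apply (is_RInt_poly _ (fun t => K * A1_0 u0 a  t)).
    - intros x. unfold A1_0. auto_derive; [|cbv beta; field]; trivial.
    - intros x. apply (@ex_derive_continuous R_AbsRing R_NormedModule).  auto_derive. trivial.
    - unfold A1_0, P1_0. field. }
Qed.
Lemma I2 (K u0 a b : R) : RInt (fun t => RInt (fun s => K * ((u0 + (0 + t * a + s * b)) ^ 2 * ((u0 + (0 + t * a + s * b)) - 1) ^ 2)) 0 (1 - t)) 0 (1) = K * P2_0 u0 a b.
Proof.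
  assert (H1 : forall t, RInt (fun s => K * ((u0 + (0 + t * a + s * b)) ^ 2 * ((u0 + (0 + t * a + s * b)) - 1) ^ 2)) 0 (1 - t) = K * P2_1 u0 a b t).
  { intros t. 
    apply is_RInt_unique. apply (is_RInt_poly _ (fun s => K * A2_1 u0 a b t s)).
    - intros x. unfold A2_1. auto_derive; [|cbv beta; field]; trivial.
    - intros x. apply (@ex_derive_continuous R_AbsRing R_NormedModule).  auto_derive. trivial.
    - unfold A2_1, P2_1. field. }
  { 
    rewrite (RInt_ext _ (fun t => K * P2_1 u0 a b  t)) by (intros; apply H1).
    apply is_RInt_unique. apply (is_RInt_poly _ (fun t => K * A2_0 u0 a b  t)).
    - intros x. unfold A2_0, P2_1. auto_derive; [|cbv beta; field]; trivial.
    - intros x. apply (@ex_derive_continuous R_AbsRing R_NormedModule). unfold P2_1. auto_derive. trivial.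
    - unfold A2_0, P2_0. field. }
Qed.
Lemma I3 (K u0 a b c : R) : RInt (fun t => RInt (fun s => RInt (fun r => K * ((u0 + (0 + t * a + s * b + r * c)) ^ 2 * ((u0 + (0 + t * a + s * b + r * c)) - 1) ^ 2)) 0 (1 - t - s)) 0 (1 - t)) 0 (1) = K * P3_0 u0 a b c.
Proof.
  assert (H2 : forall t s, RInt (fun r => K * ((u0 + (0 + t * a + s * b + r * c)) ^ 2 * ((u0 + (0 + t * a + s * b + r * c)) - 1) ^ 2)) 0 (1 - t - s) = K * P3_2 u0 a b c t s).
  { intros t s. 
    apply is_RInt_unique. apply (is_RInt_poly _ (fun r => K * A3_2 u0 a b c t s r)).
    - intros x. unfold A3_2. auto_derive; [|cbv beta; field]; trivial.
    - intros x. apply (@ex_derive_continuous R_AbsRing R_NormedModule).  auto_derive. trivial.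
    - unfold A3_2, P3_2. field. }
  assert (H1 : forall t, RInt (fun s => RInt (fun r => K * ((u0 + (0 + t * a + s * b + r * c)) ^ 2 * ((u0 + (0 + t * a + s * b + r * c)) - 1) ^ 2)) 0 (1 - t - s)) 0 (1 - t) = K * P3_1 u0 a b c t).
  { intros t. 
    rewrite (RInt_ext _ (fun s => K * P3_2 u0 a b c t s)) by (intros; apply H2).
    apply is_RInt_unique. apply (is_RInt_poly _ (fun s => K * A3_1 u0 a b c t s)).
    - intros x. unfold A3_1, P3_2. auto_derive; [|cbv beta; field]; trivial.
    - intros x. apply (@ex_derive_continuous R_AbsRing R_NormedModule). unfold P3_2. auto_derive. trivial.
    - unfold A3_1, P3_1. field. }
  { 
    rewrite (RInt_ext _ (fun t => K * P3_1 u0 a b c  t)) by (intros; apply H1).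
    apply is_RInt_unique. apply (is_RInt_poly _ (fun t => K * A3_0 u0 a b c  t)).
    - intros x. unfold A3_0, P3_1. auto_derive; [|cbv beta; field]; trivial.
    - intros x. apply (@ex_derive_continuous R_AbsRing R_NormedModule). unfold P3_1. auto_derive. trivial.
    - unfold A3_0, P3_0. field. }
Qed.
Lemma ElemE1 (K u0 u1 : R) : 0 <= K -> 0 <= K * P1_0 u0 (u1-u0) /\ K*(u0^2*(u0-1)^2) + K*(u1^2*(u1-1)^2) <= 100 * (K * P1_0 u0 (u1-u0)).
Proof. intros HK.
  assert (HP : P1_0 u0 (u1-u0) = M1 (u0*u0 - (u0+u0)/2) (u0*u1 - (u0+u1)/2) (u1*u1 - (u1+u1)/2)) by (unfold P1_0, M1; field). rewrite HP.
  pose proof (M1_sos (u0*u0 - (u0+u0)/2) (u0*u1 - (u0+u1)/2) (u1*u1 - (u1+u1)/2)) as HS.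
  assert (HS0 : 0 <= M1 (u0*u0 - (u0+u0)/2) (u0*u1 - (u0+u1)/2) (u1*u1 - (u1+u1)/2) - (1/100) * ((u0*u0 - (u0+u0)/2)^2 + (u1*u1 - (u1+u1)/2)^2)) by (rewrite HS; repeat apply Rplus_le_le_0_compat; apply Rmult_le_pos; try apply pow2_ge_0; lra).
  clear HS HP. split.
  - apply Rmult_le_pos; [lra|]. assert (0 <= (u0*u0 - (u0+u0)/2)^2 + (u1*u1 - (u1+u1)/2)^2) by (repeat apply Rplus_le_le_0_compat; apply pow2_ge_0). lra.
  - set (MM := M1 (u0*u0 - (u0+u0)/2) (u0*u1 - (u0+u1)/2) (u1*u1 - (u1+u1)/2)) in *.
    assert (Hid : K*(u0^2*(u0-1)^2) + K*(u1^2*(u1-1)^2) = K * ((u0*u0 - (u0+u0)/2)^2 + (u1*u1 - (u1+u1)/2)^2)) by field. rewrite Hid.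
    replace (100 * (K * MM)) with (K * (100 * MM)) by ring. apply Rmult_le_compat_l; lra.
Qed.
Lemma ElemE2 (K u0 u1 u2 : R) : 0 <= K -> 0 <= K * P2_0 u0 (u1-u0) (u2-u0) /\ K*(u0^2*(u0-1)^2) + K*(u1^2*(u1-1)^2) + K*(u2^2*(u2-1)^2) <= 100 * (K * P2_0 u0 (u1-u0) (u2-u0)).
Proof. intros HK.
  assert (HP : P2_0 u0 (u1-u0) (u2-u0) = M2 (u0*u0 - (u0+u0)/2) (u0*u1 - (u0+u1)/2) (u0*u2 - (u0+u2)/2) (u1*u1 - (u1+u1)/2) (u1*u2 - (u1+u2)/2) (u2*u2 - (u2+u2)/2)) by (unfold P2_0, M2; field). rewrite HP.
  pose proof (M2_sos (u0*u0 - (u0+u0)/2) (u0*u1 - (u0+u1)/2) (u0*u2 - (u0+u2)/2) (u1*u1 - (u1+u1)/2) (u1*u2 - (u1+u2)/2) (u2*u2 - (u2+u2)/2)) as HS.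
  assert (HS0 : 0 <= M2 (u0*u0 - (u0+u0)/2) (u0*u1 - (u0+u1)/2) (u0*u2 - (u0+u2)/2) (u1*u1 - (u1+u1)/2) (u1*u2 - (u1+u2)/2) (u2*u2 - (u2+u2)/2) - (1/100) * ((u0*u0 - (u0+u0)/2)^2 + (u1*u1 - (u1+u1)/2)^2 + (u2*u2 - (u2+u2)/2)^2)) by (rewrite HS; repeat apply Rplus_le_le_0_compat; apply Rmult_le_pos; try apply pow2_ge_0; lra).
  clear HS HP. split.
  - apply Rmult_le_pos; [lra|]. assert (0 <= (u0*u0 - (u0+u0)/2)^2 + (u1*u1 - (u1+u1)/2)^2 + (u2*u2 - (u2+u2)/2)^2) by (repeat apply Rplus_le_le_0_compat; apply pow2_ge_0). lra.
  - set (MM := M2 (u0*u0 - (u0+u0)/2) (u0*u1 - (u0+u1)/2) (u0*u2 - (u0+u2)/2) (u1*u1 - (u1+u1)/2) (u1*u2 - (u1+u2)/2) (u2*u2 - (u2+u2)/2)) in *.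
    assert (Hid : K*(u0^2*(u0-1)^2) + K*(u1^2*(u1-1)^2) + K*(u2^2*(u2-1)^2) = K * ((u0*u0 - (u0+u0)/2)^2 + (u1*u1 - (u1+u1)/2)^2 + (u2*u2 - (u2+u2)/2)^2)) by field. rewrite Hid.
    replace (100 * (K * MM)) with (K * (100 * MM)) by ring. apply Rmult_le_compat_l; lra.
Qed.
Lemma ElemE3 (K u0 u1 u2 u3 : R) : 0 <= K -> 0 <= K * P3_0 u0 (u1-u0) (u2-u0) (u3-u0) /\ K*(u0^2*(u0-1)^2) + K*(u1^2*(u1-1)^2) + K*(u2^2*(u2-1)^2) + K*(u3^2*(u3-1)^2) <= 1000 * (K * P3_0 u0 (u1-u0) (u2-u0) (u3-u0)).
Proof. intros HK.
  assert (HP : P3_0 u0 (u1-u0) (u2-u0) (u3-u0) = M3 (u0*u0 - (u0+u0)/2) (u0*u1 - (u0+u1)/2) (u0*u2 - (u0+u2)/2) (u0*u3 - (u0+u3)/2) (u1*u1 - (u1+u1)/2) (u1*u2 - (u1+u2)/2) (u1*u3 - (u1+u3)/2) (u2*u2 - (u2+u2)/2) (u2*u3 - (u2+u3)/2) (u3*u3 - (u3+u3)/2)) by (unfold P3_0, M3; field). rewrite HP.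
  pose proof (M3_sos (u0*u0 - (u0+u0)/2) (u0*u1 - (u0+u1)/2) (u0*u2 - (u0+u2)/2) (u0*u3 - (u0+u3)/2) (u1*u1 - (u1+u1)/2) (u1*u2 - (u1+u2)/2) (u1*u3 - (u1+u3)/2) (u2*u2 - (u2+u2)/2) (u2*u3 - (u2+u3)/2) (u3*u3 - (u3+u3)/2)) as HS.
  assert (HS0 : 0 <= M3 (u0*u0 - (u0+u0)/2) (u0*u1 - (u0+u1)/2) (u0*u2 - (u0+u2)/2) (u0*u3 - (u0+u3)/2) (u1*u1 - (u1+u1)/2) (u1*u2 - (u1+u2)/2) (u1*u3 - (u1+u3)/2) (u2*u2 - (u2+u2)/2) (u2*u3 - (u2+u3)/2) (u3*u3 - (u3+u3)/2) - (1/1000) * ((u0*u0 - (u0+u0)/2)^2 + (u1*u1 - (u1+u1)/2)^2 + (u2*u2 - (u2+u2)/2)^2 + (u3*u3 - (u3+u3)/2)^2)) by (rewrite HS; repeat apply Rplus_le_le_0_compat; apply Rmult_le_pos; try apply pow2_ge_0; lra).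
  clear HS HP. split.
  - apply Rmult_le_pos; [lra|]. assert (0 <= (u0*u0 - (u0+u0)/2)^2 + (u1*u1 - (u1+u1)/2)^2 + (u2*u2 - (u2+u2)/2)^2 + (u3*u3 - (u3+u3)/2)^2) by (repeat apply Rplus_le_le_0_compat; apply pow2_ge_0). lra.
  - set (MM := M3 (u0*u0 - (u0+u0)/2) (u0*u1 - (u0+u1)/2) (u0*u2 - (u0+u2)/2) (u0*u3 - (u0+u3)/2) (u1*u1 - (u1+u1)/2) (u1*u2 - (u1+u2)/2) (u1*u3 - (u1+u3)/2) (u2*u2 - (u2+u2)/2) (u2*u3 - (u2+u3)/2) (u3*u3 - (u3+u3)/2)) in *.
    assert (Hid : K*(u0^2*(u0-1)^2) + K*(u1^2*(u1-1)^2) + K*(u2^2*(u2-1)^2) + K*(u3^2*(u3-1)^2) = K * ((u0*u0 - (u0+u0)/2)^2 + (u1*u1 - (u1+u1)/2)^2 + (u2*u2 - (u2+u2)/2)^2 + (u3*u3 - (u3+u3)/2)^2)) by field. rewrite Hid.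
    replace (1000 * (K * MM)) with (K * (1000 * MM)) by ring. apply Rmult_le_compat_l; lra.
Qed.

Lemma elem_F d eta (v : nat -> nat) (u : nat -> R) : (1 <= d <= 3)%nat -> 0 < eta ->
  0 <= sint d 1 (fun l => F eta (u (v O) + sum_lt d (fun k => List.nth k l 0 * (u (v (S k)) - u (v O))))) /\
  sum_lt (S d) (fun k => F eta (u (v k))) <= 1000 * sint d 1 (fun l => F eta (u (v O) + sum_lt d (fun k => List.nth k l 0 * (u (v (S k)) - u (v O))))).
Proof.
  intros Hd Heta. assert (HK : 0 <= / (4 * eta ^ 2)) by (left; apply Rinv_0_lt_compat; nra).
  destruct d as [|[|[|[|d]]]]; try lia; cbn [sint sum_lt List.nth]; unfold F.
  - rewrite I1. pose proof (ElemE1 (/ (4 * eta ^ 2)) (u (v 0%nat)) (u (v 1%nat)) HK). lra.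
  - rewrite I2. pose proof (ElemE2 (/ (4 * eta ^ 2)) (u (v 0%nat)) (u (v 1%nat)) (u (v 2%nat)) HK). lra.
  - rewrite I3. pose proof (ElemE3 (/ (4 * eta ^ 2)) (u (v 0%nat)) (u (v 1%nat)) (u (v 2%nat)) (u (v 3%nat)) HK). lra.
Qed.

Lemma stiff_nonneg d node ne el u : 0 <= stiff d node ne el u u.
Proof. unfold stiff. rewrite a_form_dsum. apply dsum_nonneg. intros; apply vol_nonneg.
  intros i k _ _. set (g := gradk node (el i) u (S k)). nra. Qed.

Lemma IF_nonneg d node ne el eta u : 0 < eta -> 0 <= int_Ih d node ne el (fun n => F eta (u n)).
Proof. intros Heta. rewrite int_Ih_dsum. apply dsum_nonneg. intros; apply W'_nonneg.
  intros i k _ _. unfold F. apply Rmult_le_pos. left; apply Rinv_0_lt_compat; nra.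
  apply Rmult_le_pos; apply pow2_ge_0. Qed.

Lemma ip_nonneg d node ne el u : 0 <= ip_h d node ne el u u.
Proof. unfold ip_h. rewrite int_Ih_dsum. apply dsum_nonneg. intros; apply W'_nonneg.
  intros i k _ _. nra. Qed.

Lemma aR_nonneg d node ne el eta u : 0 < eta -> 0 <= a_form d node ne el (Rmat eta u) u u.
Proof. intros Heta. rewrite a_form_dsum. apply dsum_nonneg. intros; apply vol_nonneg.
  intros i k _ _. pose proof (Rmat_nonneg eta u (el i) (S k) Heta).
  set (g := gradk node (el i) u (S k)). rewrite Rmult_assoc. apply Rmult_le_pos. lra. nra. Qed.

Lemma IF_le_energy d node ne el eta u : (1 <= d <= 3)%nat -> 0 < eta ->
  0 <= sum_lt ne (fun i => int_elem_comp d node (el i) (F eta) u) /\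
  int_Ih d node ne el (fun n => F eta (u n)) <= 1000 * sum_lt ne (fun i => int_elem_comp d node (el i) (F eta) u).
Proof.
  intros Hd Heta. split.
  - apply sum_lt_nonneg. intros i Hi. unfold int_elem_comp. apply Rmult_le_pos. unfold jac; apply Rabs_pos.
    apply (elem_F d eta (el i) u Hd Heta).
  - unfold int_Ih. replace (1000 * sum_lt ne (fun i => int_elem_comp d node (el i) (F eta) u))
      with (sum_lt ne (fun i => 1000 * int_elem_comp d node (el i) (F eta) u + 0 * 0)).
    2:{ rewrite sum_lt_lin. ring. }
    apply sum_lt_le. intros i Hi. unfold int_elem_comp.
    destruct (elem_F d eta (el i) u Hd Heta) as [H0 H1].
    set (s := sint d 1 _) in *. set (Sf := sum_lt (S d) _) in *.
    assert (HJ : 0 <= jac d node (el i)) by (unfold jac; apply Rabs_pos).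
    assert (Hf : 1 <= INR (fact d) * INR (S d)).
    { rewrite <- mult_INR. replace 1 with (INR 1) by reflexivity. apply le_INR.
      pose proof (lt_O_fact d). nia. }
    assert (Hv : vol d node (el i) / INR (S d) <= jac d node (el i)).
    { unfold vol. unfold Rdiv. rewrite Rmult_assoc, <- Rinv_mult.
      rewrite <- (Rmult_1_r (jac d node (el i))) at 2. apply Rmult_le_compat_l. auto.
      rewrite <- Rinv_1. apply Rinv_le_contravar; lra. }
    assert (Hv0 : 0 <= vol d node (el i) / INR (S d)) by apply W'_nonneg.
    assert (HSf : 0 <= Sf).
    { unfold Sf. apply sum_lt_nonneg. intros. unfold F. apply Rmult_le_pos. left; apply Rinv_0_lt_compat; nra.
      apply Rmult_le_pos; apply pow2_ge_0. }
    apply Rle_trans with (vol d node (el i) / INR (S d) * (1000 * s)). apply Rmult_le_compat_l; lra.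
    apply Rle_trans with (jac d node (el i) * (1000 * s)). apply Rmult_le_compat_r; lra. lra.
Qed.

Theorem lemma5 :
  (forall (d nn : nat) (node : nat -> nat -> R) (ne : nat) (el : nat -> nat -> nat)
      (Omega : (nat -> R) -> Prop),
    (1 <= d <= 3)%nat -> structured_triangulation d nn node ne el Omega ->
    forall (eta eps T : R) (N : nat),
      0 < eta -> 0 < eps < 1 / 2 -> 0 < T -> (1 <= N)%nat ->
      forall phin phi1 mu1 : nat -> R,
        Geps_scheme d node ne el eta eps (T / INR N) phin phi1 mu1 ->
        let dt := T / INR N in
        let omega := fun n => mu1 n - (dFc eta (phi1 n) + dFe eta (phin n)) in
        (int_Ih d node ne el (fun n => Geps eps (phi1 n))
           - int_Ih d node ne el (fun n => Geps eps (phin n))) / dt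
        + ip_h d node ne el omega omega
        + a_form d node ne el (Rmat eta phi1) phi1 phi1
        <= / (8 * eta ^ 2) * (stiff d node ne el phin phin + stiff d node ne el phi1 phi1))
  /\
  (forall d : nat, (1 <= d <= 3)%nat ->
    exists C : R -> R -> R,
    forall (nn : nat) (node : nat -> nat -> R) (ne : nat) (el : nat -> nat -> nat)
      (Omega : (nat -> R) -> Prop),
    structured_triangulation d nn node ne el Omega ->
    forall (eta eps T : R) (N : nat),
      0 < eta -> 0 < eps < 1 / 2 -> 0 < T -> (1 <= N)%nat ->
      forall phi mu : nat -> nat -> R,
        (forall m, (m < N)%nat ->
           Geps_scheme d node ne el eta eps (T / INR N) (phi m) (phi (S m)) (mu (S m))) ->
        forall n, (n < N)%nat ->
          int_Ih d node ne el (fun x => Geps eps (phi (S n) x))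
          <= C (energy d node ne el eta (phi O))
               (int_Ih d node ne el (fun x => Geps eps (phi O x)))
             * (1 + T / eta ^ 2)).
Proof.
  split.
  - intros d nn node ne el Omega Hd Htri eta eps T N Heta He HT HN phin phi1 mu1 Hs dt omega.
    assert (HN' : 0 < INR N) by (apply lt_0_INR; lia).
    assert (Hdt : 0 < T / INR N) by (apply Rdiv_lt_0_compat; lra).
    exact (part1_core d node ne el eta eps (T / INR N) phin phi1 mu1 Heta He Hdt Hs).
  - intros d Hd. exists (fun E G0 => Rabs G0 + 500 * Rabs E).
    intros nn node ne el Omega Htri eta eps T N Heta He HT HN phi mu Hs n Hn.
    cbv beta.
    assert (HN' : 0 < INR N) by (apply lt_0_INR; lia).
    assert (Hdt : 0 < T / INR N) by (apply Rdiv_lt_0_compat; lra).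
    set (dt := T / INR N) in *.
    set (Eh := fun m => / 2 * stiff d node ne el (phi m) (phi m) + int_Ih d node ne el (fun x => F eta (phi m x))).
    set (Gm := fun m => int_Ih d node ne el (fun x => Geps eps (phi m x))).
    assert (Hdec : forall m, (m <= N)%nat -> Eh m <= Eh O).
    { induction m; intros Hm. lra. apply Rle_trans with (Eh m).
      unfold Eh. apply (energy_decay d node ne el eta eps dt (phi m) (phi (S m)) (mu (S m)) Heta He Hdt (Hs m ltac:(lia))).
      apply IHm; lia. }
    assert (HS : forall m, (m <= N)%nat -> stiff d node ne el (phi m) (phi m) <= 2 * Eh O).
    { intros m Hm. pose proof (Hdec m Hm). pose proof (IF_nonneg d node ne el eta (phi m) Heta). unfold Eh in *. lra. }
    assert (HE0 : 0 <= Eh O).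
    { pose proof (IF_nonneg d node ne el eta (phi O) Heta). pose proof (stiff_nonneg d node ne el (phi O)). unfold Eh. lra. }
    assert (HK : 0 < / (8 * eta ^ 2)) by (apply Rinv_0_lt_compat; nra).
    assert (HG : forall m, (m <= N)%nat -> Gm m <= Gm O + INR m * dt * (/ (8 * eta ^ 2) * (4 * Eh O))).
    { induction m; intros Hm. simpl. lra.
      pose proof (part1_core d node ne el eta eps dt (phi m) (phi (S m)) (mu (S m)) Heta He Hdt (Hs m ltac:(lia))) as P.
      cbv zeta in P.
      pose proof (ip_nonneg d node ne el (fun n0 => mu (S m) n0 - (dFc eta (phi (S m) n0) + dFe eta (phi m n0)))).
      pose proof (aR_nonneg d node ne el eta (phi (S m)) Heta).
      pose proof (HS m ltac:(lia)). pose proof (HS (S m) Hm).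
      assert (Q : (Gm (S m) - Gm m) / dt <= / (8 * eta ^ 2) * (4 * Eh O)).
      { apply Rle_trans with (/ (8 * eta ^ 2) * (stiff d node ne el (phi m) (phi m) + stiff d node ne el (phi (S m)) (phi (S m)))).
        unfold Gm. lra. apply Rmult_le_compat_l; lra. }
      assert (Q2 : Gm (S m) - Gm m <= dt * (/ (8 * eta ^ 2) * (4 * Eh O))).
      { replace (Gm (S m) - Gm m) with (dt * ((Gm (S m) - Gm m) / dt)) by (field; lra).
        apply Rmult_le_compat_l; lra. }
      pose proof (IHm ltac:(lia)). rewrite S_INR. lra. }
    pose proof (HG (S n) ltac:(lia)) as HGn.
    assert (Hdt2 : INR (S n) * dt <= T).
    { unfold dt. assert (INR (S n) <= INR N) by (apply le_INR; lia).
      replace (INR (S n) * (T / INR N)) with (T * (INR (S n) / INR N)) by (field; lra).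
      rewrite <- (Rmult_1_r T) at 2. apply Rmult_le_compat_l. lra.
      apply (Rmult_le_reg_r (INR N)). lra. unfold Rdiv. rewrite Rmult_assoc, Rinv_l; lra. }
    destruct (IF_le_energy d node ne el eta (phi O) Hd Heta) as [HI0 HI1].
    assert (HEh : Eh O <= 1000 * energy d node ne el eta (phi O)).
    { unfold Eh, energy. pose proof (stiff_nonneg d node ne el (phi O)). lra. }
    set (EE := energy d node ne el eta (phi O)) in *.
    set (G0 := int_Ih d node ne el (fun x => Geps eps (phi O x))) in *.
    change (Gm (S n) <= (Rabs G0 + 500 * Rabs EE) * (1 + T / eta ^ 2)).
    assert (Htau : 0 <= T / eta ^ 2) by (apply Rmult_le_pos; [lra | left; apply Rinv_0_lt_compat; nra]).
    assert (HA : INR (S n) * dt * (/ (8 * eta ^ 2) * (4 * Eh O)) <= T / eta ^ 2 * (Eh O / 2)).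
    { replace (T / eta ^ 2 * (Eh O / 2)) with (T * (/ (8 * eta ^ 2) * (4 * Eh O))) by (field; lra).
      apply Rmult_le_compat_r. apply Rmult_le_pos; lra. auto. }
    assert (HB : T / eta ^ 2 * (Eh O / 2) <= T / eta ^ 2 * (500 * Rabs EE)).
    { apply Rmult_le_compat_l. auto. pose proof (Rle_abs EE). lra. }
    assert (HC : 0 <= T / eta ^ 2 * Rabs G0) by (apply Rmult_le_pos; [auto | apply Rabs_pos]).
    pose proof (Rle_abs G0). pose proof (Rabs_pos EE).
    unfold Gm in HGn. fold G0 in HGn. unfold Gm.
    nra.
Qed.
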